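(* Let $s>0$, $Y>0$ and $\tau\geq 0$, and consider the delay differential system \[ \dot x(t)=x(t)(1-x(t))-y(t)x(t),\qquad \dot y(t)=-sy(t)+Ye^{-s\tau}y(t-\tau)x(t-\tau), \] with initial data $(x(t),y(t))=(\phi(t),\psi(t))$ for $t\in[-\tau,0]$, where $(\phi,\psi)\in X:=C([-\tau,0],\mathbb{R}_+)\times C([-\tau,0],\mathbb{R}_+)$. \begin{enumerate} \item The solutions exist, are unique, and remain nonnegative for all $t\geq 0$. \item $\limsup_{t\to\infty}x(t)\leq 1$ and $\limsup_{t\to\infty}y(t)\leq \frac{1}{4s}Ye^{-s\tau}(s+1)^2$. \item If the initial data lie in \[ X^0=\{(\phi,\psi)\in X:\ \phi(0)>0 \text{ and there exists } \theta\in[-\tau,0] \text{ with } \phi(\theta)\psi(\theta)>0\}, \] then $x(t)>0$ for all $t>0$ and there exists $T\geq 0$ such that $y(t)>0$ for all $t>T$. \end{enumerate}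
   Context: $\mathbb{R}_+=\{x\in\mathbb{R}: x\geq 0\}$. $C([-\tau,0],\mathbb{R}_+)$ is the Banach space of continuous functions $[-\tau,0]\to\mathbb{R}_+$ with the uniform norm. *)

(* Defs.v *)
From Stdlib Require Import Reals.
From Coquelicot Require Import Coquelicot.
Open Scope R_scope.

(* An element of C([-tau,0], R_+): continuous on [-tau,0] (within the
   interval) and nonnegative there.  Values outside [-tau,0] are irrelevant. *)
Definition nonneg_cont_on (tau : R) (phi : R -> R) : Prop :=
  (forall t, -tau <= t <= 0 ->
     filterlim phi (within (fun u => -tau <= u <= 0) (locally t)) (locally (phi t)))
  /\ (forall t, -tau <= t <= 0 -> 0 <= phi t).

Definition is_solution (s Y tau : R) (phi psi x y : R -> R) : Prop :=
  (forall t, -tau <= t <= 0 -> x t = phi t /\ y t = psi t)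
  /\ filterlim x (at_right 0) (locally (x 0))
  /\ filterlim y (at_right 0) (locally (y 0))
  /\ (forall t, 0 < t ->
        is_derive x t (x t * (1 - x t) - y t * x t)
        /\ is_derive y t (- s * y t + Y * exp (- s * tau) * y (t - tau) * x (t - tau))).

Definition in_X0 (tau : R) (phi psi : R -> R) : Prop :=
  phi 0 > 0 /\ exists th, -tau <= th <= 0 /\ phi th * psi th > 0.

(* Main.v *)
Require Import Defs.
From Stdlib Require Import Reals Lra Lia Classical.
From Coquelicot Require Import Coquelicot.
Open Scope R_scope.

Definition Cont (f : R -> R) := forall z, continuity_pt f z.

Lemma cpt_intro f x : (forall e, 0 < e -> exists d, 0 < d /\ forall u, Rabs (u - x) < d -> Rabs (f u - f x) < e) -> continuity_pt f x.
Proof.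
  intros H e He. destruct (H e He) as [d [Hd Hu]]. exists d. split; auto.
  intros u [_ Hu']. apply Hu. exact Hu'.
Qed.

Lemma cpt_elim f x : continuity_pt f x -> forall e, 0 < e -> exists d, 0 < d /\ forall u, Rabs (u - x) < d -> Rabs (f u - f x) < e.
Proof.
  intros H e He. destruct (H e He) as [d [Hd Hu]]. exists d. split; auto.
  intros u Hux. destruct (Req_dec u x) as [->|Hne].
  - rewrite Rminus_eq_0, Rabs_R0; lra.
  - apply Hu. split; [split; [exact I| auto] | exact Hux].
Qed.

Lemma Cont_plus f g : Cont f -> Cont g -> Cont (fun u => f u + g u).
Proof. intros Hf Hg z. exact (continuity_pt_plus f g z (Hf z) (Hg z)). Qed.
Lemma Cont_minus f g : Cont f -> Cont g -> Cont (fun u => f u - g u).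
Proof. intros Hf Hg z. exact (continuity_pt_minus f g z (Hf z) (Hg z)). Qed.
Lemma Cont_mult f g : Cont f -> Cont g -> Cont (fun u => f u * g u).
Proof. intros Hf Hg z. exact (continuity_pt_mult f g z (Hf z) (Hg z)). Qed.
Lemma Cont_opp f : Cont f -> Cont (fun u => - f u).
Proof. intros Hf z. exact (continuity_pt_opp f z (Hf z)). Qed.
Lemma Cont_const c : Cont (fun _ => c).
Proof. intros z. exact (continuity_pt_const (fun _ => c) z (fun _ _ => eq_refl)). Qed.
Lemma Cont_id : Cont (fun u => u).
Proof. intros z. exact (continuity_pt_id z). Qed.
Lemma Cont_comp f g : Cont f -> Cont g -> Cont (fun u => g (f u)).
Proof. intros Hf Hg z. exact (continuity_pt_comp f g z (Hf z) (Hg (f z))). Qed.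
Lemma Cont_exp : Cont exp.
Proof. intros z. apply derivable_continuous_pt. apply derivable_pt_exp. Qed.
Lemma Cont_lip f K : 0 < K -> (forall u v, Rabs (f u - f v) <= K * Rabs (u - v)) -> Cont f.
Proof.
  intros HK H z. apply cpt_intro. intros e He. exists (e / K). split.
  - apply Rdiv_lt_0_compat; lra.
  - intros u Hu. eapply Rle_lt_trans. apply H.
    apply Rmult_lt_reg_l with (/ K). apply Rinv_0_lt_compat; lra.
    rewrite <- Rmult_assoc, Rinv_l by lra. rewrite Rmult_1_l.
    unfold Rdiv in Hu. lra.
Qed.
Lemma Cont_shift f a : Cont f -> Cont (fun u => f (u - a)).
Proof. intros Hf. apply (Cont_comp (fun u => u - a) f); [apply Cont_minus; [apply Cont_id|apply Cont_const]|exact Hf]. Qed.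

Lemma Cont_continuous f z : Cont f -> continuous f z.
Proof. intros H. apply continuity_pt_filterlim. apply H. Qed.

Definition cl (M v : R) := Rmax 0 (Rmin v M).
Definition cls (M v : R) := Rmax (-M) (Rmin v M).

Lemma cl_lip M u v : 0 <= M -> Rabs (cl M u - cl M v) <= Rabs (u - v).
Proof. intros HM. unfold cl, Rmax, Rmin. repeat destruct Rle_dec; unfold Rabs; repeat destruct Rcase_abs; lra. Qed.
Lemma cls_lip M u v : 0 <= M -> Rabs (cls M u - cls M v) <= Rabs (u - v).
Proof. intros HM. unfold cls, Rmax, Rmin. repeat destruct Rle_dec; unfold Rabs; repeat destruct Rcase_abs; lra. Qed.
Lemma cl_bnd M v : 0 <= M -> 0 <= cl M v <= M.
Proof. intros HM. unfold cl, Rmax, Rmin. repeat destruct Rle_dec; lra. Qed.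
Lemma cls_bnd M v : 0 <= M -> -M <= cls M v <= M.
Proof. intros HM. unfold cls, Rmax, Rmin. repeat destruct Rle_dec; lra. Qed.
Lemma cl_id M v : 0 <= v <= M -> cl M v = v.
Proof. intros H. unfold cl, Rmax, Rmin. repeat destruct Rle_dec; lra. Qed.
Lemma cls_id M v : -M <= v <= M -> cls M v = v.
Proof. intros H. unfold cls, Rmax, Rmin. repeat destruct Rle_dec; lra. Qed.

Lemma Cont_cl M f : 0 <= M -> Cont f -> Cont (fun u => cl M (f u)).
Proof. intros HM Hf. apply (Cont_comp f (cl M)); auto. apply (Cont_lip _ 1); [lra|]. intros; rewrite Rmult_1_l; apply cl_lip; auto. Qed.
Lemma Cont_cls M f : 0 <= M -> Cont f -> Cont (fun u => cls M (f u)).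
Proof. intros HM Hf. apply (Cont_comp f (cls M)); auto. apply (Cont_lip _ 1); [lra|]. intros; rewrite Rmult_1_l; apply cls_lip; auto. Qed.
Lemma Cont_pos f : Cont f -> Cont (fun u => f (Rmax u 0)).
Proof. intros Hf. apply (Cont_comp (fun u => Rmax u 0) f); auto. apply (Cont_lip _ 1); [lra|].
  intros u v. rewrite Rmult_1_l. unfold Rmax. repeat destruct Rle_dec; unfold Rabs; repeat destruct Rcase_abs; lra. Qed.

Lemma exR f a b : Cont f -> ex_RInt f a b.
Proof. intros H. apply (@ex_RInt_continuous R_CompleteNormedModule). intros z _. apply Cont_continuous; auto. Qed.

Lemma RInt_deriv f t : Cont f -> is_derive (fun t => RInt f 0 t) t (f t).
Proof.
  intros H. apply (is_derive_RInt f (fun t => RInt f 0 t) 0 t).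
  - exists (mkposreal 1 Rlt_0_1). intros b _. apply (@RInt_correct R_CompleteNormedModule). apply exR; auto.
  - apply Cont_continuous; auto.
Qed.

Lemma is_derive_cpt f t l : is_derive f t l -> continuity_pt f t.
Proof. intros H. apply continuity_pt_filterlim. apply (@ex_derive_continuous R_AbsRing R_NormedModule). exists l; auto. Qed.

Lemma Cont_RInt f : Cont f -> Cont (fun t => RInt f 0 t).
Proof. intros H z. apply (is_derive_cpt _ _ _ (RInt_deriv f z H)). Qed.

Lemma RInt_minus' f g a b : Cont f -> Cont g -> RInt (fun u => f u - g u) a b = RInt f a b - RInt g a b.
Proof. intros Hf Hg. exact (@RInt_minus R_CompleteNormedModule f g a b (exR _ _ _ Hf) (exR _ _ _ Hg)). Qed.
Lemma RInt_plus' f g a b : Cont f -> Cont g -> RInt (fun u => f u + g u) a b = RInt f a b + RInt g a b.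
Proof. intros Hf Hg. exact (@RInt_plus R_CompleteNormedModule f g a b (exR _ _ _ Hf) (exR _ _ _ Hg)). Qed.
Lemma RInt_const' K a b : RInt (fun _ => K) a b = (b - a) * K.
Proof. exact (@RInt_const R_CompleteNormedModule a b K). Qed.

Lemma IntB g h t : 0 <= t -> Cont g -> Cont h -> (forall u, 0 <= u <= t -> Rabs (g u) <= h u) -> Rabs (RInt g 0 t) <= RInt h 0 t.
Proof.
  intros Ht Hg Hh H. eapply Rle_trans. apply abs_RInt_le; auto. apply exR; auto.
  apply RInt_le; auto. apply exR. apply (Cont_comp g Rabs); auto. intros z; apply Rcontinuity_abs.
  apply exR; auto. intros; apply H; lra.
Qed.

Lemma RInt_exp D t : 0 < D -> RInt (fun u => exp (D * u)) 0 t = (exp (D * t) - 1) / D.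
Proof.
  intros HD. apply is_RInt_unique.
  replace ((exp (D * t) - 1) / D) with (minus (exp (D*t) / D) (exp (D*0)/D)).
  2:{ rewrite Rmult_0_r, exp_0. unfold minus, plus, opp; simpl. field. lra. }
  apply (is_RInt_derive (fun u => exp (D*u)/D)).
  - intros x _. auto_derive; auto. field. lra.
  - intros x _. apply Cont_continuous. apply (Cont_comp (fun u => D * u) exp). apply Cont_mult; [apply Cont_const|apply Cont_id]. apply Cont_exp.
Qed.

Lemma deriv_left_sign h t l d : is_derive h t l -> 0 < d ->
  (forall u, t - d < u < t -> h u < h t) -> 0 <= l.
Proof.
  intros Hd Hdp Hu. apply is_derive_Reals in Hd.
  destruct (Rle_or_lt 0 l) as [|Hl]; auto. exfalso.
  destruct (Hd (- l / 2)) as [d' Hk]. lra. destruct d' as [d' Hd']. simpl in Hk.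
  set (k := - Rmin d d' / 2).
  assert (Hm1 : 0 < Rmin d d') by (apply Rmin_pos; lra).
  assert (Hm2 : Rmin d d' <= d) by apply Rmin_l.
  assert (Hm3 : Rmin d d' <= d') by apply Rmin_r.
  assert (Hk0 : k <> 0) by (unfold k; lra).
  assert (Hkd : Rabs k < d') by (unfold k; rewrite Rabs_left; lra).
  specialize (Hk k Hk0 Hkd).
  assert (Hlt : h (t + k) < h t) by (apply Hu; unfold k; lra).
  assert (Hik : / k < 0) by (apply Rinv_lt_0_compat; unfold k; lra).
  assert (Hq : (h (t + k) - h t) / k > 0) by (unfold Rdiv; nra).
  apply Rabs_def2 in Hk. lra.
Qed.

Lemma deriv_pos_right h t l d : is_derive h t l -> 0 < l -> 0 < d ->
  exists u, t < u < t + d /\ h t < h u.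
Proof.
  intros Hd Hl Hdp. apply is_derive_Reals in Hd.
  destruct (Hd (l / 2)) as [d' Hk]. lra. destruct d' as [d' Hd']. simpl in Hk.
  set (k := Rmin d d' / 2).
  assert (Hm1 : 0 < Rmin d d') by (apply Rmin_pos; lra).
  assert (Hm2 : Rmin d d' <= d) by apply Rmin_l.
  assert (Hm3 : Rmin d d' <= d') by apply Rmin_r.
  assert (Hk0 : k <> 0) by (unfold k; lra).
  assert (Hkd : Rabs k < d') by (unfold k; rewrite Rabs_right; lra).
  specialize (Hk k Hk0 Hkd).
  apply Rabs_def2 in Hk.
  exists (t + k). split. unfold k; lra.
  assert (Hik : / k > 0) by (apply Rinv_0_lt_compat; unfold k; lra).
  assert (Hq : (h (t + k) - h t) / k > 0) by lra.
  unfold Rdiv in Hq.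
  destruct (Rle_or_lt (h (t+k)) (h t)); [|lra].
  assert ((h (t + k) - h t) * / k <= 0). apply Rmult_le_0_r; lra. lra.
Qed.

Definition RC (h : R -> R) (a : R) := forall e, 0 < e -> exists d, 0 < d /\ forall u, a < u < a + d -> Rabs (h u - h a) < e.

Lemma RC_of_cpt h a : continuity_pt h a -> RC h a.
Proof. intros H e He. destruct (cpt_elim h a H e He) as [d [Hd Hu]]. exists d; split; auto.
  intros u Hu'. apply Hu. rewrite Rabs_right; lra. Qed.

Lemma crossing h a b : a <= b -> (forall t, a < t <= b -> continuity_pt h t) -> RC h a -> h a < 0 ->
  (forall t, a < t <= b -> h t = 0 -> (forall u, a <= u < t -> h u < 0) -> exists l, is_derive h t l /\ l < 0) ->
  forall t, a <= t <= b -> h t < 0.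
Proof.
  intros Hab Hc Hrc Ha Hcr t1 Ht1.
  destruct (Rlt_or_le (h t1) 0) as [|H1]; auto. exfalso.
  assert (Ht1a : a < t1). { destruct (Req_dec t1 a) as [->|]; [lra|lra]. }
  set (E := fun u => a <= u <= t1 /\ forall v, a <= v <= u -> h v < 0).
  assert (HbE : bound E). { exists t1. intros u [Hu _]. lra. }
  assert (HaE : exists u, E u). { exists a. split. lra. intros v Hv. replace v with a by lra. auto. }
  destruct (completeness E HbE HaE) as [m [Hub Hlub]].
  assert (HmE : forall w, E w -> w <= m) by (intros; apply Hub; auto).
  assert (Hmt1 : m <= t1). { apply Hlub. intros u [Hu _]. lra. }
  assert (Hma : a <= m) by (apply HmE; destruct HaE; split; [lra|intros v Hv; replace v with a by lra; auto]).
  assert (C1 : forall u, a <= u < m -> h u < 0).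
  { intros u Hu. destruct (Rlt_or_le u m) as [_|]; [|lra].
    destruct (classic (exists w, E w /\ u < w)) as [[w [[_ Hw] Huw]]|Hn].
    - apply Hw. lra.
    - exfalso. assert (m <= u). apply Hlub. intros w Hw. destruct (Rle_or_lt w u); auto.
      exfalso; apply Hn; exists w; auto. lra. }
  assert (C2 : a < m).
  { destruct (Hrc (- h a)) as [d [Hd Hu]]. lra.
    set (w := Rmin (a + d / 2) t1).
    assert (Hw1 : w <= a + d/2) by apply Rmin_l. assert (Hw2 : w <= t1) by apply Rmin_r.
    assert (Hw3 : a < w) by (unfold w; apply Rmin_glb_lt; lra).
    assert (E w). { split. lra. intros v Hv. destruct (Req_dec v a) as [->|]; auto.
      specialize (Hu v ltac:(lra)). apply Rabs_def2 in Hu. lra. }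
    specialize (HmE w H). lra. }
  assert (C3 : h m <= 0).
  { destruct (Rle_or_lt (h m) 0) as [|Hp]; auto. exfalso.
    destruct (cpt_elim h m (Hc m ltac:(lra)) (h m) Hp) as [d [Hd Hu]].
    set (u := Rmax a (m - d/2)).
    assert (a <= u) by apply Rmax_l. assert (m - d/2 <= u) by apply Rmax_r.
    assert (u < m) by (unfold u; apply Rmax_lub_lt; lra).
    specialize (Hu u ltac:(rewrite Rabs_left; lra)). apply Rabs_def2 in Hu.
    specialize (C1 u ltac:(lra)). lra. }
  assert (C4 : 0 <= h m).
  { destruct (Rle_or_lt 0 (h m)) as [|Hn]; auto. exfalso.
    destruct (Req_dec m t1) as [->|Hne]; [lra|].
    destruct (cpt_elim h m (Hc m ltac:(lra)) (- h m) ltac:(lra)) as [d [Hd Hu]].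
    set (w := Rmin (m + d / 2) t1).
    assert (Hw1 : w <= m + d/2) by apply Rmin_l. assert (Hw2 : w <= t1) by apply Rmin_r.
    assert (Hw3 : m < w) by (unfold w; apply Rmin_glb_lt; lra).
    assert (E w). { split. lra. intros v Hv. destruct (Rlt_or_le v m). apply C1; lra.
      specialize (Hu v ltac:(rewrite Rabs_right; lra)). apply Rabs_def2 in Hu. lra. }
    specialize (HmE w H). lra. }
  destruct (Hcr m ltac:(lra) ltac:(lra) C1) as [l [Hd Hl]].
  assert (0 <= l). { apply (deriv_left_sign h m l (m - a)); auto. lra.
    intros u Hu. rewrite (Rle_antisym _ _ C3 C4). apply C1; lra. }
  lra.
Qed.

Lemma RC_minus h q a : RC h a -> continuity_pt q a -> RC (fun u => h u - q u) a.
Proof.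
  intros Hh Hq e He. destruct (Hh (e/2)) as [d1 [Hd1 H1]]. lra.
  destruct (cpt_elim q a Hq (e/2)) as [d2 [Hd2 H2]]. lra.
  exists (Rmin d1 d2). split. apply Rmin_pos; auto.
  intros u Hu. assert (Rmin d1 d2 <= d1) by apply Rmin_l. assert (Rmin d1 d2 <= d2) by apply Rmin_r.
  specialize (H1 u ltac:(lra)). specialize (H2 u ltac:(rewrite Rabs_right; lra)).
  apply Rabs_def2 in H1. apply Rabs_def2 in H2. apply Rabs_def1; lra.
Qed.

Lemma is_derive_minus' f g x df dg : is_derive f x df -> is_derive g x dg -> is_derive (fun u => f u - g u) x (df - dg).
Proof. intros Hf Hg. exact (@is_derive_minus R_AbsRing R_NormedModule f g x df dg Hf Hg). Qed.
Lemma is_derive_plus' f g x df dg : is_derive f x df -> is_derive g x dg -> is_derive (fun u => f u + g u) x (df + dg).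
Proof. intros Hf Hg. exact (@is_derive_plus R_AbsRing R_NormedModule f g x df dg Hf Hg). Qed.
Lemma is_derive_mult' f g x df dg : is_derive f x df -> is_derive g x dg -> is_derive (fun u => f u * g u) x (df * g x + f x * dg).
Proof. intros Hf Hg. exact (@is_derive_mult R_AbsRing f g x df dg Hf Hg Rmult_comm). Qed.
Lemma is_derive_scal' f x k df : is_derive f x df -> is_derive (fun u => k * f u) x (k * df).
Proof. intros Hf. exact (is_derive_scal f x k df Hf). Qed.

Lemma crossing2 h q dq a b : a <= b -> (forall t, a < t <= b -> continuity_pt h t) -> RC h a ->
  (forall t, is_derive q t (dq t)) -> h a < q a ->
  (forall t, a < t <= b -> h t = q t -> (forall u, a <= u < t -> h u < q u) -> exists l, is_derive h t l /\ l < dq t) ->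
  forall t, a <= t <= b -> h t < q t.
Proof.
  intros Hab Hc Hrc Hq Ha Hcr t Ht.
  assert (Hqc : forall t, continuity_pt q t) by (intros; eapply is_derive_cpt; eauto).
  cut ((fun u => h u - q u) t < 0). simpl; lra.
  apply (crossing (fun u => h u - q u) a b); auto.
  - intros; apply continuity_pt_minus; auto.
  - apply RC_minus; auto.
  - simpl; lra.
  - intros t0 Ht0 He Hb. destruct (Hcr t0 Ht0 ltac:(lra)) as [l [Hl Hl']].
    intros u Hu; specialize (Hb u Hu); simpl in Hb; lra.
    exists (l - dq t0). split. apply is_derive_minus'; auto. lra.
Qed.

Section Picard.
Variables s c tau M B0 : R.
Hypothesis hs : 0 < s.
Hypothesis hc : 0 <= c.
Hypothesis htau : 0 <= tau.
Hypothesis hM : 0 <= M.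
Variables Phi Psi : R -> R.
Hypothesis cPhi : Cont Phi.
Hypothesis cPsi : Cont Psi.
Hypothesis bPsi : forall u, Rabs (Psi u) <= B0.

Definition Ff a b := cls M a * (1 - cls M a - cl M b).
Definition Gf b p q := - s * b + c * cl M q * cl M p.
Definition stepX (x y : R -> R) t := Phi t + RInt (fun u => Ff (x u) (y u)) 0 (Rmax t 0).
Definition stepY (x y : R -> R) t := Psi t + RInt (fun u => Gf (y u) (x (u - tau)) (y (u - tau))) 0 (Rmax t 0).

Definition Lp := 1 + 3 * M + s + c * M.

Lemma Lp_pos : 0 < Lp.
Proof. unfold Lp. nra. Qed.

Lemma Ff_lip a b a' b' : Rabs (Ff a b - Ff a' b') <= Lp * (Rabs (a - a') + Rabs (b - b')).
Proof.
  unfold Ff. set (p := cls M a). set (p' := cls M a'). set (q := cl M b). set (q' := cl M b').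
  assert (H1 : Rabs (p - p') <= Rabs (a - a')) by apply cls_lip, hM.
  assert (H2 : Rabs (q - q') <= Rabs (b - b')) by apply cl_lip, hM.
  assert (Bp : -M <= p <= M) by apply cls_bnd, hM.
  assert (Bp' : -M <= p' <= M) by apply cls_bnd, hM.
  assert (Bq : 0 <= q <= M) by apply cl_bnd, hM.
  replace (p * (1 - p - q) - p' * (1 - p' - q')) with ((p - p') * (1 - p - p' - q) - p' * (q - q')) by ring.
  eapply Rle_trans. apply Rabs_triang. rewrite Rabs_Ropp, !Rabs_mult.
  assert (Rabs (1 - p - p' - q) <= 1 + 3 * M) by (apply Rabs_le; lra).
  assert (Rabs p' <= M) by (apply Rabs_le; lra).
  assert (0 <= Rabs (p - p')) by apply Rabs_pos. assert (0 <= Rabs (q - q')) by apply Rabs_pos.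
  assert (0 <= Rabs (1 - p - p' - q)) by apply Rabs_pos.
  assert (0 <= Rabs (a - a')) by apply Rabs_pos. assert (0 <= Rabs (b - b')) by apply Rabs_pos.
  assert (Rabs (p - p') * Rabs (1 - p - p' - q) <= Rabs (a - a') * (1 + 3 * M)) by (apply Rmult_le_compat; lra).
  assert (0 <= Rabs p') by apply Rabs_pos.
  assert (Rabs p' * Rabs (q - q') <= M * Rabs (b - b')) by (apply Rmult_le_compat; lra).
  assert (Rabs (a - a') * (1 + 3 * M) <= Rabs (a - a') * Lp) by (apply Rmult_le_compat_l; unfold Lp; nra).
  assert (M * Rabs (b - b') <= Lp * Rabs (b - b')) by (apply Rmult_le_compat_r; unfold Lp; nra).
  lra.
Qed.

Lemma Gf_lip b p q b' p' q' : Rabs (Gf b p q - Gf b' p' q') <= Lp * (Rabs (b - b') + Rabs (p - p') + Rabs (q - q')).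
Proof.
  unfold Gf. set (P := cl M p). set (P' := cl M p'). set (Q := cl M q). set (Q' := cl M q').
  assert (H1 : Rabs (P - P') <= Rabs (p - p')) by apply cl_lip, hM.
  assert (H2 : Rabs (Q - Q') <= Rabs (q - q')) by apply cl_lip, hM.
  assert (BP : 0 <= P <= M) by apply cl_bnd, hM.
  assert (BQ' : 0 <= Q' <= M) by apply cl_bnd, hM.
  replace (- s * b + c * Q * P - (- s * b' + c * Q' * P')) with (- s * (b - b') + (c * P) * (Q - Q') + (c * Q') * (P - P')) by ring.
  eapply Rle_trans. apply Rabs_triang. eapply Rle_trans. apply Rplus_le_compat_r. apply Rabs_triang.
  rewrite !Rabs_mult, Rabs_Ropp, (Rabs_right s), (Rabs_right c), (Rabs_right P), (Rabs_right Q') by lra.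
  assert (0 <= Rabs (P - P')) by apply Rabs_pos. assert (0 <= Rabs (Q - Q')) by apply Rabs_pos.
  assert (0 <= Rabs (b - b')) by apply Rabs_pos.
  assert (0 <= Rabs (p - p')) by apply Rabs_pos. assert (0 <= Rabs (q - q')) by apply Rabs_pos.
  assert (c * P <= c * M) by nra. assert (c * Q' <= c * M) by nra.
  assert (c * P * Rabs (Q - Q') <= c * M * Rabs (q - q')) by (apply Rmult_le_compat; nra).
  assert (c * Q' * Rabs (P - P') <= c * M * Rabs (p - p')) by (apply Rmult_le_compat; nra).
  assert (s <= Lp /\ c * M <= Lp) by (unfold Lp; nra).
  assert (s * Rabs (b - b') <= Lp * Rabs (b - b')) by (apply Rmult_le_compat_r; lra).
  assert (c * M * Rabs (q - q') <= Lp * Rabs (q - q')) by (apply Rmult_le_compat_r; lra).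
  assert (c * M * Rabs (p - p') <= Lp * Rabs (p - p')) by (apply Rmult_le_compat_r; lra).
  lra.
Qed.

Lemma Ff_bnd a b : Rabs (Ff a b) <= M + 2 * M * M.
Proof.
  unfold Ff. assert (Bp : -M <= cls M a <= M) by apply cls_bnd, hM.
  assert (Bq : 0 <= cl M b <= M) by apply cl_bnd, hM.
  rewrite Rabs_mult. assert (Rabs (cls M a) <= M) by (apply Rabs_le; lra).
  assert (Rabs (1 - cls M a - cl M b) <= 1 + 2 * M) by (apply Rabs_le; lra).
  assert (0 <= Rabs (cls M a)) by apply Rabs_pos.
  assert (0 <= Rabs (1 - cls M a - cl M b)) by apply Rabs_pos. nra.
Qed.

Lemma Gf_bnd b p q : Rabs b <= B0 -> Rabs (Gf b p q) <= s * B0 + c * M * M.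
Proof.
  intros Hb. unfold Gf. assert (B1 : 0 <= cl M p <= M) by apply cl_bnd, hM.
  assert (B2 : 0 <= cl M q <= M) by apply cl_bnd, hM.
  eapply Rle_trans. apply Rabs_triang. rewrite Rabs_mult, Rabs_Ropp, Rabs_right by lra.
  rewrite (Rabs_right (c * cl M q * cl M p)) by (apply Rle_ge; apply Rmult_le_pos; [apply Rmult_le_pos|]; lra).
  assert (cl M q * cl M p <= M * M) by nra. nra.
Qed.

Lemma Cont_Ff x y : Cont x -> Cont y -> Cont (fun u => Ff (x u) (y u)).
Proof. intros Hx Hy. unfold Ff. apply Cont_mult. apply Cont_cls; auto. apply Cont_minus. apply Cont_minus. apply Cont_const.
  apply Cont_cls; auto. apply Cont_cl; auto. Qed.

Lemma Cont_Gf x y : Cont x -> Cont y -> Cont (fun u => Gf (y u) (x (u - tau)) (y (u - tau))).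
Proof. intros Hx Hy. unfold Gf. apply Cont_plus. apply Cont_mult. apply Cont_const. auto.
  apply Cont_mult. apply Cont_mult. apply Cont_const. apply Cont_cl; auto. apply Cont_shift; auto.
  apply Cont_cl; auto. apply Cont_shift; auto. Qed.

Lemma Cont_stepX x y : Cont x -> Cont y -> Cont (stepX x y).
Proof. intros Hx Hy. unfold stepX. apply Cont_plus; auto.
  apply (Cont_pos (fun t => RInt (fun u => Ff (x u) (y u)) 0 t)). apply Cont_RInt. apply Cont_Ff; auto. Qed.
Lemma Cont_stepY x y : Cont x -> Cont y -> Cont (stepY x y).
Proof. intros Hx Hy. unfold stepY. apply Cont_plus; auto.
  apply (Cont_pos (fun t => RInt (fun u => Gf (y u) (x (u - tau)) (y (u - tau))) 0 t)). apply Cont_RInt. apply Cont_Gf; auto. Qed.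

Lemma IntB2 g1 g2 H t : 0 <= t -> Cont g1 -> Cont g2 -> Cont H ->
  (forall u, 0 <= u <= t -> Rabs (g1 u) + Rabs (g2 u) <= H u) ->
  Rabs (RInt g1 0 t) + Rabs (RInt g2 0 t) <= RInt H 0 t.
Proof.
  intros Ht H1 H2 HH Hb.
  assert (A1 : Cont (fun u => Rabs (g1 u))) by (apply (Cont_comp g1 Rabs); auto; intros z; apply Rcontinuity_abs).
  assert (A2 : Cont (fun u => Rabs (g2 u))) by (apply (Cont_comp g2 Rabs); auto; intros z; apply Rcontinuity_abs).
  eapply Rle_trans. apply Rplus_le_compat; apply abs_RInt_le; auto; apply exR; auto.
  rewrite <- RInt_plus'; auto. apply RInt_le; auto. apply exR. apply Cont_plus; auto. apply exR; auto.
  intros; apply Hb; lra.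
Qed.

Definition dd (x y x' y' : R -> R) u := Rabs (x u - x' u) + Rabs (y u - y' u).

Lemma Cont_dd x y x' y' : Cont x -> Cont y -> Cont x' -> Cont y' -> Cont (dd x y x' y').
Proof. intros. unfold dd. apply Cont_plus; apply (Cont_comp _ Rabs); try (intros z; apply Rcontinuity_abs); apply Cont_minus; auto. Qed.

Lemma step_diff x y x' y' t : Cont x -> Cont y -> Cont x' -> Cont y' ->
  dd (stepX x y) (stepY x y) (stepX x' y') (stepY x' y') t <=
  RInt (fun u => 2 * Lp * (dd x y x' y' u + dd x y x' y' (u - tau))) 0 (Rmax t 0).
Proof.
  intros Hx Hy Hx' Hy'. unfold dd at 1, stepX, stepY.
  replace (Phi t + RInt (fun u => Ff (x u) (y u)) 0 (Rmax t 0) - (Phi t + RInt (fun u => Ff (x' u) (y' u)) 0 (Rmax t 0)))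
    with (RInt (fun u => Ff (x u) (y u) - Ff (x' u) (y' u)) 0 (Rmax t 0)) by (rewrite (RInt_minus' (fun u => Ff (x u) (y u)) (fun u => Ff (x' u) (y' u))) by (apply Cont_Ff; auto); lra).
  replace (Psi t + RInt (fun u => Gf (y u) (x (u - tau)) (y (u - tau))) 0 (Rmax t 0) - (Psi t + RInt (fun u => Gf (y' u) (x' (u - tau)) (y' (u - tau))) 0 (Rmax t 0)))
    with (RInt (fun u => Gf (y u) (x (u - tau)) (y (u - tau)) - Gf (y' u) (x' (u - tau)) (y' (u - tau))) 0 (Rmax t 0)) by (rewrite (RInt_minus' (fun u => Gf (y u) (x (u - tau)) (y (u - tau))) (fun u => Gf (y' u) (x' (u - tau)) (y' (u - tau)))) by (apply Cont_Gf; auto); lra).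
  apply IntB2. apply Rmax_r.
  apply Cont_minus; apply Cont_Ff; auto. apply Cont_minus; apply Cont_Gf; auto.
  apply Cont_mult. apply Cont_const. apply Cont_plus. apply Cont_dd; auto. apply Cont_shift. apply Cont_dd; auto.
  intros u _. pose proof (Ff_lip (x u) (y u) (x' u) (y' u)). pose proof (Gf_lip (y u) (x (u - tau)) (y (u - tau)) (y' u) (x' (u - tau)) (y' (u - tau))).
  unfold dd. pose proof Lp_pos.
  assert (0 <= Rabs (x u - x' u)) by apply Rabs_pos. assert (0 <= Rabs (y u - y' u)) by apply Rabs_pos.
  assert (0 <= Rabs (x (u-tau) - x' (u-tau))) by apply Rabs_pos. assert (0 <= Rabs (y (u-tau) - y' (u-tau))) by apply Rabs_pos.
  nra.
Qed.


Fixpoint pic (n : nat) : (R -> R) * (R -> R) :=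
  match n with
  | O => (Phi, Psi)
  | S n => (stepX (fst (pic n)) (snd (pic n)), stepY (fst (pic n)) (snd (pic n)))
  end.
Definition xs n := fst (pic n).
Definition ys n := snd (pic n).

Lemma Cont_xys n : Cont (xs n) /\ Cont (ys n).
Proof. induction n as [|n [IH1 IH2]]; simpl. split; auto.
  split. apply Cont_stepX; auto. apply Cont_stepY; auto. Qed.

Definition Dc := 8 * Lp.
Definition bb := M + 2 * M * M + (s * B0 + c * M * M).
Definition Cc := bb / Dc.
Definition del n t := dd (xs (S n)) (ys (S n)) (xs n) (ys n) t.

Lemma Dc_pos : 0 < Dc.
Proof. unfold Dc. pose proof Lp_pos. lra. Qed.

Lemma B0_pos : 0 <= B0.
Proof. eapply Rle_trans. apply Rabs_pos. apply (bPsi 0). Qed.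

Lemma bb_pos : 0 <= bb.
Proof. unfold bb. pose proof B0_pos. assert (0 <= c * M * M) by (apply Rmult_le_pos; [apply Rmult_le_pos|]; lra).
  assert (0 <= s * B0) by (apply Rmult_le_pos; lra). nra. Qed.

Lemma Cc_pos : 0 <= Cc.
Proof. unfold Cc. apply Rmult_le_pos. apply bb_pos. left; apply Rinv_0_lt_compat, Dc_pos. Qed.

Lemma exp_ge_id x : 0 <= x -> x <= exp x.
Proof. intros Hx. destruct (Req_dec x 0) as [->|Hne]. rewrite exp_0; lra. pose proof (exp_ineq1 x Hne). lra. Qed.

Lemma del0 t : del 0 t <= Cc * exp (Dc * Rmax t 0).
Proof.
  unfold del, dd, xs, ys. simpl. unfold stepX, stepY.
  replace (Phi t + RInt (fun u => Ff (Phi u) (Psi u)) 0 (Rmax t 0) - Phi t) with (RInt (fun u => Ff (Phi u) (Psi u)) 0 (Rmax t 0) : R) by lra.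
  replace (Psi t + RInt (fun u => Gf (Psi u) (Phi (u - tau)) (Psi (u - tau))) 0 (Rmax t 0) - Psi t) with (RInt (fun u => Gf (Psi u) (Phi (u - tau)) (Psi (u - tau))) 0 (Rmax t 0) : R) by lra.
  eapply Rle_trans. apply (IntB2 _ _ (fun _ => bb)). apply Rmax_r. apply Cont_Ff; auto. apply Cont_Gf; auto. apply Cont_const.
  intros u _. pose proof (Ff_bnd (Phi u) (Psi u)). pose proof (Gf_bnd (Psi u) (Phi (u - tau)) (Psi (u - tau)) (bPsi u)). unfold bb; lra.
  rewrite RInt_const'. pose proof (exp_ge_id (Dc * Rmax t 0)). pose proof Dc_pos. pose proof bb_pos.
  assert (0 <= Rmax t 0) by apply Rmax_r. assert (0 <= Dc * Rmax t 0) by (apply Rmult_le_pos; lra).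
  unfold Cc. replace ((Rmax t 0 - 0) * bb) with (bb / Dc * (Dc * Rmax t 0)) by (field; lra).
  apply Rmult_le_compat_l; auto. apply Rmult_le_pos; auto. left; apply Rinv_0_lt_compat; lra.
Qed.

Lemma RInt_Kexp K t : RInt (fun u => K * exp (Dc * u)) 0 t = K * ((exp (Dc * t) - 1) / Dc) :> R.
Proof.
  rewrite <- (RInt_exp Dc t Dc_pos).
  exact (@RInt_scal R_CompleteNormedModule (fun u => exp (Dc * u)) 0 t K (exR _ _ _ (Cont_comp (fun u => Dc * u) exp (Cont_mult _ _ (Cont_const Dc) Cont_id) Cont_exp))).
Qed.

Lemma exp_mono x y : x <= y -> exp x <= exp y.
Proof. intros H. destruct (Req_dec x y) as [->|]. lra. left; apply exp_increasing; lra. Qed.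

Lemma half_pow_pos n : 0 < (/ 2) ^ n.
Proof. apply pow_lt. lra. Qed.

Lemma half_pow_mono n m : (n <= m)%nat -> (/ 2) ^ m <= (/ 2) ^ n.
Proof. intros H. induction H. lra. simpl. pose proof (half_pow_pos m). lra. Qed.

Lemma del_bnd n t : del n t <= Cc * exp (Dc * Rmax t 0) * (/ 2) ^ n.
Proof.
  revert t. induction n as [|n IH]; intros t.
  - simpl. rewrite Rmult_1_r. apply del0.
  - unfold del. destruct (Cont_xys n) as [H1 H2]. destruct (Cont_xys (S n)) as [H3 H4].
    change (xs (S (S n))) with (stepX (xs (S n)) (ys (S n))). change (ys (S (S n))) with (stepY (xs (S n)) (ys (S n))).
    change (xs (S n)) with (stepX (xs n) (ys n)) at 3. change (ys (S n)) with (stepY (xs n) (ys n)) at 3.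
    eapply Rle_trans. apply step_diff; auto.
    fold (xs (S n)) (ys (S n)).
    pose proof Dc_pos. pose proof Lp_pos. pose proof Cc_pos. pose proof (half_pow_pos n).
    eapply Rle_trans. apply (RInt_le _ (fun u => (4 * Lp * Cc * (/2)^n) * exp (Dc * u))). apply Rmax_r.
    apply exR. apply Cont_mult. apply Cont_const. apply Cont_plus. apply Cont_dd; auto. apply Cont_shift; apply Cont_dd; auto.
    apply exR. apply Cont_mult. apply Cont_const. apply (Cont_comp (fun u => Dc * u) exp). apply Cont_mult. apply Cont_const. apply Cont_id. apply Cont_exp.
    intros u Hu. pose proof (IH u) as A1. pose proof (IH (u - tau)) as A2. fold (del n u) (del n (u - tau)).
    assert (Hu0 : 0 < u) by (pose proof (Rmax_r t 0); lra).
    rewrite Rmax_left in A1 by lra.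
    assert (exp (Dc * Rmax (u - tau) 0) <= exp (Dc * u)).
    { apply exp_mono. apply Rmult_le_compat_l. lra. apply Rmax_lub; lra. }
    assert (Cc * exp (Dc * Rmax (u - tau) 0) * (/ 2) ^ n <= Cc * exp (Dc * u) * (/ 2) ^ n).
    { apply Rmult_le_compat_r. lra. apply Rmult_le_compat_l; lra. }
    assert (0 <= del n u + del n (u - tau)). { unfold del, dd.
      pose proof (Rabs_pos (xs (S n) u - xs n u)). pose proof (Rabs_pos (ys (S n) u - ys n u)).
      pose proof (Rabs_pos (xs (S n) (u - tau) - xs n (u - tau))). pose proof (Rabs_pos (ys (S n) (u - tau) - ys n (u - tau))). lra. }
    assert (2 * Lp * (del n u + del n (u - tau)) <= 2 * Lp * (2 * (Cc * exp (Dc * u) * (/ 2) ^ n))).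
    { apply Rmult_le_compat_l; lra. }
    lra.
    rewrite RInt_Kexp. set (E := exp (Dc * Rmax t 0)).
    assert (0 <= E) by (left; apply exp_pos).
    replace (4 * Lp * Cc * (/ 2) ^ n * ((E - 1) / Dc)) with (Cc * (/ 2) ^ n * (E - 1) / 2) by (unfold Dc; field; lra).
    simpl. nra.
Qed.

Lemma dd_triang x y x' y' x'' y'' t : dd x y x'' y'' t <= dd x y x' y' t + dd x' y' x'' y'' t.
Proof. unfold dd.
  pose proof (Rabs_triang (x t - x' t) (x' t - x'' t)). pose proof (Rabs_triang (y t - y' t) (y' t - y'' t)).
  replace (x t - x' t + (x' t - x'' t)) with (x t - x'' t) in * by ring.
  replace (y t - y' t + (y' t - y'' t)) with (y t - y'' t) in * by ring. lra. Qed.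

Lemma dd_sym x y x' y' t : dd x y x' y' t = dd x' y' x y t.
Proof. unfold dd. rewrite (Rabs_minus_sym (x t)), (Rabs_minus_sym (y t)). reflexivity. Qed.

Lemma dist_bnd n k t : dd (xs (n + k)) (ys (n + k)) (xs n) (ys n) t <= 2 * Cc * exp (Dc * Rmax t 0) * ((/ 2) ^ n - (/ 2) ^ (n + k)).
Proof.
  induction k as [|k IH].
  - rewrite Nat.add_0_r. unfold dd. rewrite !Rminus_eq_0, Rabs_R0. lra.
  - rewrite Nat.add_succ_r. eapply Rle_trans. apply (dd_triang _ _ (xs (n + k)) (ys (n + k))).
    fold (del (n + k) t). pose proof (del_bnd (n + k) t). simpl ((/2) ^ S (n + k)). lra.
Qed.

Lemma dist_bnd' n m t : (n <= m)%nat -> dd (xs m) (ys m) (xs n) (ys n) t <= 2 * Cc * exp (Dc * Rmax t 0) * (/ 2) ^ n.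
Proof.
  intros H. replace m with (n + (m - n))%nat by lia. eapply Rle_trans. apply dist_bnd.
  pose proof (half_pow_pos (n + (m - n))). pose proof Cc_pos. pose proof (exp_pos (Dc * Rmax t 0)).
  apply Rmult_le_compat_l. nra. lra.
Qed.

Lemma small_geom K : 0 <= K -> forall e, 0 < e -> exists N, K * (/ 2) ^ N < e.
Proof.
  intros HK e He. destruct (pow_lt_1_zero (/ 2) ltac:(rewrite Rabs_right; lra) (e / (K + 1))) as [N HN].
  apply Rdiv_lt_0_compat; lra. exists N. specialize (HN N (le_n N)).
  rewrite Rabs_right in HN by (left; apply half_pow_pos).
  pose proof (half_pow_pos N).
  apply Rmult_lt_compat_l with (r := K + 1) in HN; [|lra].
  replace ((K + 1) * (e / (K + 1))) with e in HN by (field; lra). nra.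
Qed.

Lemma dist_sym_bnd N n m t : (N <= n)%nat -> (N <= m)%nat ->
  dd (xs m) (ys m) (xs n) (ys n) t <= 2 * Cc * exp (Dc * Rmax t 0) * (/ 2) ^ N.
Proof.
  intros Hn Hm. assert (HK : 0 <= 2 * Cc * exp (Dc * Rmax t 0)) by (pose proof Cc_pos; pose proof (exp_pos (Dc * Rmax t 0)); nra).
  destruct (Nat.le_ge_cases n m) as [Hnm|Hnm].
  - eapply Rle_trans. apply dist_bnd'; auto. apply Rmult_le_compat_l; auto. apply half_pow_mono; auto.
  - rewrite dd_sym. eapply Rle_trans. apply dist_bnd'; auto. apply Rmult_le_compat_l; auto. apply half_pow_mono; auto.
Qed.

Lemma cauchy_xy t : ex_lim_seq_cauchy (fun n => xs n t) /\ ex_lim_seq_cauchy (fun n => ys n t).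
Proof.
  set (K := 2 * Cc * exp (Dc * Rmax t 0)).
  assert (HK : 0 <= K) by (unfold K; pose proof Cc_pos; pose proof (exp_pos (Dc * Rmax t 0)); nra).
  split; intros [e He]; simpl; destruct (small_geom K HK e He) as [N HN]; exists N; intros n m Hn Hm;
  pose proof (dist_sym_bnd N m n t Hm Hn) as A; unfold dd in A; fold K in A;
  pose proof (Rabs_pos (xs n t - xs m t)); pose proof (Rabs_pos (ys n t - ys m t)); lra.
Qed.

Definition Xl t := real (Lim_seq (fun n => xs n t)).
Definition Yl t := real (Lim_seq (fun n => ys n t)).

Lemma lim_of_cauchy u : ex_lim_seq_cauchy u -> is_lim_seq u (real (Lim_seq u)).
Proof. intros H. apply ex_lim_seq_cauchy_corr in H. destruct H as [l Hl].
  rewrite (is_lim_seq_unique _ _ Hl). exact Hl. Qed.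

Lemma Xl_lim t : is_lim_seq (fun n => xs n t) (Xl t).
Proof. apply lim_of_cauchy, cauchy_xy. Qed.
Lemma Yl_lim t : is_lim_seq (fun n => ys n t) (Yl t).
Proof. apply lim_of_cauchy, cauchy_xy. Qed.

Lemma lim_bnd n t : dd Xl Yl (xs n) (ys n) t <= 2 * Cc * exp (Dc * Rmax t 0) * (/ 2) ^ n.
Proof.
  set (B := 2 * Cc * exp (Dc * Rmax t 0) * (/ 2) ^ n).
  destruct (Rle_or_lt (dd Xl Yl (xs n) (ys n) t) B) as [|Hlt]; auto. exfalso.
  set (e := (dd Xl Yl (xs n) (ys n) t - B) / 2).
  pose proof (Xl_lim t) as L1. pose proof (Yl_lim t) as L2.
  apply is_lim_seq_Reals in L1. apply is_lim_seq_Reals in L2.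
  destruct (L1 (e/2) ltac:(unfold e; lra)) as [N1 HN1]. destruct (L2 (e/2) ltac:(unfold e; lra)) as [N2 HN2].
  set (m := max n (max N1 N2)).
  specialize (HN1 m ltac:(unfold m; lia)). specialize (HN2 m ltac:(unfold m; lia)). unfold R_dist in *.
  pose proof (dist_bnd' n m t ltac:(unfold m; lia)). fold B in H.
  pose proof (dd_triang Xl Yl (xs m) (ys m) (xs n) (ys n) t).
  unfold dd at 2 in H0. rewrite (Rabs_minus_sym (Xl t)), (Rabs_minus_sym (Yl t)) in H0.
  unfold e in *. lra.
Qed.

Lemma bnd_local t0 t : Rabs (t - t0) < 1 -> 2 * Cc * exp (Dc * Rmax t 0) <= 2 * Cc * exp (Dc * (Rabs t0 + 1)).
Proof.
  intros H. pose proof Cc_pos. pose proof Dc_pos. apply Rmult_le_compat_l. lra. apply exp_mono. apply Rmult_le_compat_l. lra.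
  apply Rmax_lub. apply Rabs_def2 in H. pose proof (Rle_abs t0). lra. pose proof (Rabs_pos t0). lra.
Qed.

Lemma cont_approx (F : R -> R) (fn : nat -> R -> R) t0 : (forall n, Cont (fn n)) ->
  (forall e, 0 < e -> exists N, forall u, Rabs (u - t0) < 1 -> Rabs (F u - fn N u) < e) -> continuity_pt F t0.
Proof.
  intros Hc Ha. apply cpt_intro. intros e He.
  destruct (Ha (e/3) ltac:(lra)) as [N HN].
  destruct (cpt_elim _ _ (Hc N t0) (e/3) ltac:(lra)) as [d [Hd Hu]].
  exists (Rmin 1 d). split. apply Rmin_pos; lra. intros u Hu'.
  assert (Rmin 1 d <= 1) by apply Rmin_l. assert (Rmin 1 d <= d) by apply Rmin_r.
  specialize (Hu u ltac:(lra)). pose proof (HN u ltac:(lra)). pose proof (HN t0 ltac:(rewrite Rminus_eq_0, Rabs_R0; lra)).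
  replace (F u - F t0) with ((F u - fn N u) + (fn N u - fn N t0) - (F t0 - fn N t0)) by ring.
  eapply Rle_lt_trans. apply Rabs_triang. eapply Rle_lt_trans. apply Rplus_le_compat_r. apply Rabs_triang.
  rewrite Rabs_Ropp. lra.
Qed.

Lemma lim_close t0 : forall e, 0 < e -> exists N, forall u, Rabs (u - t0) < 1 -> dd Xl Yl (xs N) (ys N) u < e.
Proof.
  intros e He. set (K := 2 * Cc * exp (Dc * (Rabs t0 + 1))).
  assert (HK : 0 <= K) by (unfold K; pose proof Cc_pos; pose proof (exp_pos (Dc * (Rabs t0 + 1))); nra).
  destruct (small_geom K HK e He) as [N HN]. exists N. intros u Hu.
  eapply Rle_lt_trans. apply lim_bnd. eapply Rle_lt_trans; [|apply HN].
  apply Rmult_le_compat_r. left; apply half_pow_pos. apply bnd_local; auto.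
Qed.

Lemma Cont_lim : Cont Xl /\ Cont Yl.
Proof.
  split; intros t0.
  - apply (cont_approx Xl xs). intros n; apply Cont_xys. intros e He. destruct (lim_close t0 e He) as [N HN].
    exists N. intros u Hu. specialize (HN u Hu). unfold dd in HN. pose proof (Rabs_pos (Yl u - ys N u)). lra.
  - apply (cont_approx Yl ys). intros n; apply Cont_xys. intros e He. destruct (lim_close t0 e He) as [N HN].
    exists N. intros u Hu. specialize (HN u Hu). unfold dd in HN. pose proof (Rabs_pos (Xl u - xs N u)). lra.
Qed.

Lemma fixed_point t : Xl t = stepX Xl Yl t /\ Yl t = stepY Xl Yl t.
Proof.
  destruct Cont_lim as [CX CY].
  set (E := 2 * Cc * exp (Dc * Rmax t 0)).
  assert (HE : 0 <= E) by (unfold E; pose proof Cc_pos; pose proof (exp_pos (Dc * Rmax t 0)); nra).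
  set (a := dd Xl Yl (stepX Xl Yl) (stepY Xl Yl) t).
  assert (Ha0 : 0 <= a) by (unfold a, dd; pose proof (Rabs_pos (Xl t - stepX Xl Yl t)); pose proof (Rabs_pos (Yl t - stepY Xl Yl t)); lra).
  assert (Hb : forall n, a <= (E + 4 * Lp * Rmax t 0 * E) * (/ 2) ^ n).
  { intros n. destruct (Cont_xys n) as [C1 C2].
    unfold a. eapply Rle_trans. apply (dd_triang _ _ (xs (S n)) (ys (S n))).
    pose proof (lim_bnd (S n) t) as A1. fold E in A1.
    change (xs (S n)) with (stepX (xs n) (ys n)) in *. change (ys (S n)) with (stepY (xs n) (ys n)) in *.
    rewrite (dd_sym (stepX (xs n) (ys n))).
    pose proof (step_diff Xl Yl (xs n) (ys n) t CX CY C1 C2) as A2.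
    assert (A3 : RInt (fun u => 2 * Lp * (dd Xl Yl (xs n) (ys n) u + dd Xl Yl (xs n) (ys n) (u - tau))) 0 (Rmax t 0)
       <= RInt (fun _ => 4 * Lp * E * (/ 2) ^ n) 0 (Rmax t 0)).
    { apply RInt_le. apply Rmax_r. apply exR. apply Cont_mult. apply Cont_const. apply Cont_plus. apply Cont_dd; auto.
      apply Cont_shift, Cont_dd; auto. apply exR, Cont_const.
      intros u Hu. pose proof (lim_bnd n u). pose proof (lim_bnd n (u - tau)). pose proof Lp_pos. pose proof (half_pow_pos n).
      assert (2 * Cc * exp (Dc * Rmax u 0) <= E). { unfold E. pose proof Cc_pos. pose proof Dc_pos. apply Rmult_le_compat_l. lra.
        apply exp_mono. apply Rmult_le_compat_l. lra. apply Rmax_lub; [lra | apply Rmax_r]. }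
      assert (2 * Cc * exp (Dc * Rmax (u - tau) 0) <= E). { unfold E. pose proof Cc_pos. pose proof Dc_pos. apply Rmult_le_compat_l. lra.
        apply exp_mono. apply Rmult_le_compat_l. lra. apply Rmax_lub. pose proof (Rmax_l t 0). lra. apply Rmax_r. }
      assert (2 * Cc * exp (Dc * Rmax u 0) * (/2)^n <= E * (/2)^n) by (apply Rmult_le_compat_r; lra).
      assert (2 * Cc * exp (Dc * Rmax (u - tau) 0) * (/2)^n <= E * (/2)^n) by (apply Rmult_le_compat_r; lra).
      assert (dd Xl Yl (xs n) (ys n) u + dd Xl Yl (xs n) (ys n) (u - tau) <= 2 * (E * (/2)^n)) by lra.
      assert (2 * Lp * (dd Xl Yl (xs n) (ys n) u + dd Xl Yl (xs n) (ys n) (u - tau)) <= 2 * Lp * (2 * (E * (/2)^n))) by (apply Rmult_le_compat_l; lra).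
      lra. }
    rewrite RInt_const' in A3. simpl in A1. pose proof (half_pow_pos n). assert (0 <= E * (/2)^n) by (apply Rmult_le_pos; lra). lra. }
  assert (a = 0).
  { destruct (Req_dec a 0) as [|Hne]; auto. exfalso.
    assert (HK : 0 <= E + 4 * Lp * Rmax t 0 * E) by (pose proof Lp_pos; pose proof (Rmax_r t 0); assert (0 <= Lp * Rmax t 0 * E) by (apply Rmult_le_pos; [apply Rmult_le_pos|]; lra); lra).
    destruct (small_geom _ HK a ltac:(lra)) as [N HN]. specialize (Hb N). lra. }
  unfold a, dd in H. pose proof (Rabs_pos (Xl t - stepX Xl Yl t)). pose proof (Rabs_pos (Yl t - stepY Xl Yl t)).
  split; apply Rminus_diag_uniq; apply Rabs_eq_0; lra.
Qed.

End Picard.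

Lemma ball_R (x e y : R) : ball x e y <-> Rabs (y - x) < e.
Proof. split; intros H; exact H. Qed.

Definition clampt (tau t : R) := Rmax (- tau) (Rmin t 0).

Lemma clamp_in tau t : 0 <= tau -> - tau <= clampt tau t <= 0.
Proof. intros. unfold clampt, Rmax, Rmin. repeat destruct Rle_dec; lra. Qed.
Lemma clamp_id tau t : - tau <= t <= 0 -> clampt tau t = t.
Proof. intros. unfold clampt, Rmax, Rmin. repeat destruct Rle_dec; lra. Qed.
Lemma clamp_lip tau u v : 0 <= tau -> Rabs (clampt tau u - clampt tau v) <= Rabs (u - v).
Proof. intros. unfold clampt, Rmax, Rmin. repeat destruct Rle_dec; unfold Rabs; repeat destruct Rcase_abs; lra. Qed.
Lemma clamp_pos tau t : 0 <= tau -> 0 <= t -> clampt tau t = 0.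
Proof. intros. unfold clampt, Rmax, Rmin. repeat destruct Rle_dec; lra. Qed.

Lemma ext_cont tau f : 0 <= tau -> nonneg_cont_on tau f -> Cont (fun t => f (clampt tau t)).
Proof.
  intros Ht [Hc _] z. apply cpt_intro. intros e He.
  pose proof (clamp_in tau z Ht) as Hz.
  specialize (Hc (clampt tau z) Hz). apply filterlim_locally with (eps := mkposreal e He) in Hc.
  destruct Hc as [[d Hd] Hu]. exists d. split; auto. intros u Hu'.
  assert (A : ball (clampt tau z) d (clampt tau u)).
  { apply ball_R. eapply Rle_lt_trans. apply clamp_lip; auto. exact Hu'. }
  specialize (Hu _ A (clamp_in tau u Ht)). apply ball_R in Hu. exact Hu.
Qed.

Lemma RC_of_filterlim h a : filterlim h (at_right a) (locally (h a)) -> RC h a.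
Proof.
  intros H e He. apply filterlim_locally with (eps := mkposreal e He) in H.
  destruct H as [[d Hd] Hu]. exists d. split; auto. intros u Hu'.
  assert (A : ball a d u) by (apply ball_R; rewrite Rabs_right; lra).
  specialize (Hu u A ltac:(simpl; lra)). apply ball_R in Hu. exact Hu.
Qed.

Lemma filterlim_of_cpt h a : continuity_pt h a -> filterlim h (at_right a) (locally (h a)).
Proof.
  intros H. apply (filterlim_filter_le_1 _ (filter_le_within _)). apply continuity_pt_filterlim. exact H.
Qed.

Lemma RC_cmax h a : RC h a -> continuity_pt (fun u => h (Rmax u a)) a.
Proof.
  intros H. apply cpt_intro. intros e He. destruct (H e He) as [d [Hd Hu]]. exists d. split; auto.
  intros u Hu'. rewrite (Rmax_right a a) by lra. destruct (Rle_or_lt u a).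
  - rewrite Rmax_right by lra. rewrite Rminus_eq_0, Rabs_R0; lra.
  - rewrite Rmax_left by lra. apply Hu. rewrite Rabs_right in Hu'; lra.
Qed.

Lemma cmax_RC h a : continuity_pt (fun u => h (Rmax u a)) a -> RC h a.
Proof.
  intros H e He. destruct (cpt_elim _ _ H e He) as [d [Hd Hu]]. exists d. split; auto.
  intros u Hu'. specialize (Hu u ltac:(rewrite Rabs_right; lra)).
  rewrite Rmax_left in Hu by lra. rewrite Rmax_right in Hu by lra. exact Hu.
Qed.

Lemma eps_arg v K : 0 < K -> (forall e, 0 < e -> v < e * K) -> v <= 0.
Proof.
  intros HK H. destruct (Rle_or_lt v 0) as [|Hv]; auto. exfalso.
  specialize (H (v / (2 * K)) ltac:(apply Rdiv_lt_0_compat; lra)).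
  replace (v / (2 * K) * K) with (v / 2) in H by (field; lra). lra.
Qed.

Lemma exp_decay Q e sg a : 0 < e -> 0 < sg -> exists T, a <= T /\ forall t, T <= t -> Q * exp (- sg * (t - a)) <= e.
Proof.
  intros He Hsg. destruct (Rle_or_lt Q 0) as [HQ|HQ].
  - exists a. split. lra. intros t _. pose proof (exp_pos (- sg * (t - a))). nra.
  - exists (a + Rmax 0 (ln (Q / e)) / sg). split.
    + pose proof (Rmax_l 0 (ln (Q / e))). assert (0 <= Rmax 0 (ln (Q / e)) / sg) by (apply Rmult_le_pos; [lra| left; apply Rinv_0_lt_compat; lra]). lra.
    + intros t Ht. assert (Hl : ln (Q / e) <= sg * (t - a)).
      { pose proof (Rmax_r 0 (ln (Q / e))). assert (Rmax 0 (ln (Q / e)) / sg * sg <= (t - a) * sg) by (apply Rmult_le_compat_r; lra).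
        replace (Rmax 0 (ln (Q / e)) / sg * sg) with (Rmax 0 (ln (Q / e))) in H0 by (field; lra). lra. }
      assert (exp (- sg * (t - a)) <= exp (- ln (Q / e))) by (apply exp_mono; lra).
      rewrite exp_Ropp, exp_ln in H by (apply Rdiv_lt_0_compat; lra).
      replace (/ (Q / e)) with (e / Q) in H by (field; lra).
      apply Rmult_le_compat_l with (r := Q) in H; [|lra]. replace (Q * (e / Q)) with e in H by (field; lra). exact H.
Qed.

Lemma is_derive_shift (f : R -> R) (t a l : R) : is_derive f (t - a) l -> is_derive (fun u => f (u - a)) t l.
Proof.
  intros H. apply is_derive_Reals in H. apply is_derive_Reals.
  intros e He. destruct (H e He) as [d Hd]. exists d. intros h Hh Hhd.
  replace (t + h - a) with (t - a + h) by ring. apply Hd; auto.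
Qed.

Lemma is_derive_const' (a t : R) : is_derive (fun _ => a) t 0.
Proof. exact (@is_derive_const R_AbsRing R_NormedModule a t). Qed.

Lemma is_derive_opp' (f : R -> R) x l : is_derive f x l -> is_derive (fun u => - f u) x (- l).
Proof. intros H. pose proof (is_derive_scal' f x (-1) l H). eapply is_derive_ext; [|replace (- l) with (-1 * l) by ring; exact H0]. intros; simpl; ring. Qed.

Lemma deriv_expq A k t0 t : is_derive (fun u => A * exp (k * (u - t0))) t (A * k * exp (k * (t - t0))).
Proof. auto_derive; auto. unfold Rminus; ring. Qed.

Lemma deriv_linq K e t0 t : is_derive (fun u => K + e * (1 + u - t0)) t e.
Proof. auto_derive; auto. unfold Rminus; ring. Qed.

Lemma cls_neg M v : 0 <= M -> v <= 0 -> v <= cls M v <= 0.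
Proof. intros. unfold cls, Rmax, Rmin. repeat destruct Rle_dec; lra. Qed.
Lemma cls_ge1 M v : 1 <= M -> 1 <= v -> 1 <= cls M v.
Proof. intros. unfold cls, Rmax, Rmin. repeat destruct Rle_dec; lra. Qed.

Lemma Ff_neg M X Y : 0 <= M -> X < 0 -> - Ff M X Y <= (1 + 2 * M) * (- X).
Proof.
  intros HM HX. unfold Ff. pose proof (cls_neg M X HM ltac:(lra)). pose proof (cl_bnd M Y HM).
  set (p := cls M X) in *. set (r := 1 - p - cl M Y).
  assert (Rabs r <= 1 + 2 * M). { unfold r. apply Rabs_le. pose proof (cls_bnd M X HM). fold p in H1. lra. }
  assert (- (p * r) <= Rabs p * Rabs r). { rewrite <- Rabs_mult. rewrite <- Rabs_Ropp. apply Rle_abs. }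
  assert (Rabs p <= - X) by (rewrite Rabs_left1; lra).
  assert (Rabs p * Rabs r <= (- X) * (1 + 2 * M)) by (apply Rmult_le_compat; try apply Rabs_pos; lra).
  lra.
Qed.

Lemma Ff_ge1 M X Y : 1 <= M -> 1 <= X -> Ff M X Y <= 0.
Proof.
  intros HM HX. unfold Ff. pose proof (cls_ge1 M X HM HX). pose proof (cl_bnd M Y ltac:(lra)).
  assert (1 - cls M X - cl M Y <= 0) by lra. nra.
Qed.

Lemma Ff_id M X Y : 0 <= X <= M -> 0 <= Y <= M -> Ff M X Y = X * (1 - X - Y).
Proof. intros. unfold Ff. rewrite cls_id by lra. rewrite cl_id by lra. reflexivity. Qed.

Lemma Gf_lb s c M b p q : 0 <= c -> 0 <= M -> - s * b <= Gf s c M b p q.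
Proof. intros. unfold Gf. pose proof (cl_bnd M p H0). pose proof (cl_bnd M q H0).
  assert (0 <= c * cl M q * cl M p) by (apply Rmult_le_pos; [apply Rmult_le_pos|]; lra). lra. Qed.

Lemma Gf_id s c M b p q : 0 <= p <= M -> 0 <= q <= M -> Gf s c M b p q = - s * b + c * q * p.
Proof. intros. unfold Gf. rewrite !cl_id by lra. reflexivity. Qed.

Lemma cl_le M v : 0 <= M -> 0 <= v -> cl M v <= v.
Proof. intros. unfold cl, Rmax, Rmin. repeat destruct Rle_dec; lra. Qed.

Lemma cpt_plus f g x : continuity_pt f x -> continuity_pt g x -> continuity_pt (fun u => f u + g u) x.
Proof. exact (continuity_pt_plus f g x). Qed.
Lemma cpt_minus f g x : continuity_pt f x -> continuity_pt g x -> continuity_pt (fun u => f u - g u) x.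
Proof. exact (continuity_pt_minus f g x). Qed.
Lemma cpt_mult f g x : continuity_pt f x -> continuity_pt g x -> continuity_pt (fun u => f u * g u) x.
Proof. exact (continuity_pt_mult f g x). Qed.

Lemma bound_on f a b : a <= b -> (forall u, a <= u <= b -> continuity_pt f u) -> exists K, 0 <= K /\ forall u, a <= u <= b -> Rabs (f u) <= K.
Proof.
  intros Hab Hc. destruct (continuity_ab_maj f a b Hab Hc) as [M1 [H1 _]]. destruct (continuity_ab_min f a b Hab Hc) as [m1 [H2 _]].
  exists (Rabs (f M1) + Rabs (f m1)). split. pose proof (Rabs_pos (f M1)). pose proof (Rabs_pos (f m1)). lra.
  intros u Hu. specialize (H1 u Hu). specialize (H2 u Hu). apply Rabs_le.
  pose proof (Rle_abs (f M1)). pose proof (Rle_abs (- f m1)). rewrite Rabs_Ropp in H0.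
  pose proof (Rabs_pos (f M1)). pose proof (Rabs_pos (f m1)). lra.
Qed.

Lemma Rabs_le_inv x K : Rabs x <= K -> - K <= x <= K.
Proof. unfold Rabs; destruct Rcase_abs; intros; lra. Qed.

Lemma prod_bnd K X a b : Rabs X <= K -> 2 * X * a * b <= K * (a * a + b * b).
Proof.
  intros H. apply Rabs_le_inv in H.
  assert (0 <= (K - X) * ((a + b) * (a + b))) by (apply Rmult_le_pos; [lra| apply Rle_0_sqr]).
  assert (0 <= (K + X) * ((a - b) * (a - b))) by (apply Rmult_le_pos; [lra| apply Rle_0_sqr]).
  nra.
Qed.

Lemma alg_ineq K c s x1 X y1 Y x1d Xd y1d Yd : 0 <= c -> 0 < s -> 0 <= K ->
  Rabs x1 <= K -> Rabs X <= K -> Rabs y1 <= K -> Rabs x1d <= K -> Rabs Yd <= K ->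
  let u := x1 - X in let v := y1 - Y in let ud := x1d - Xd in let vd := y1d - Yd in
  let df := (x1 * (1 - x1) - y1 * x1) - (X * (1 - X) - Y * X) in
  let dg := (- s * y1 + c * y1d * x1d) - (- s * Y + c * Yd * Xd) in
  df * u + u * df + (dg * v + v * dg) <= (2 + 7 * K + 2 * c * K) * (u * u + v * v) + c * K * (ud * ud + vd * vd).
Proof.
  intros Hc Hs HK B1 B2 B3 B4 B5 u v ud vd df dg.
  assert (E1 : df = u * (1 - x1 - X - y1) - X * v) by (unfold df, u, v; ring).
  assert (E2 : dg = - s * v + c * (x1d * vd + Yd * ud)) by (unfold dg, v, vd, ud; ring).
  rewrite E1, E2.
  apply Rabs_le_inv in B1. apply Rabs_le_inv in B2. apply Rabs_le_inv in B3.
  assert (P1 : u * u * (1 - x1 - X - y1) <= u * u * (1 + 3 * K)) by (apply Rmult_le_compat_l; [apply Rle_0_sqr | lra]).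
  assert (P2 : 2 * (- X) * u * v <= K * (u * u + v * v)) by (apply prod_bnd; apply Rabs_le; lra).
  assert (P10 : 0 <= v * v) by apply Rle_0_sqr.
  assert (P3 : 2 * x1d * v * vd <= K * (v * v + vd * vd)) by (apply prod_bnd; auto).
  assert (P4 : 2 * Yd * v * ud <= K * (v * v + ud * ud)) by (apply prod_bnd; auto).
  assert (P3' : c * (2 * x1d * v * vd) <= c * (K * (v * v + vd * vd))) by (apply Rmult_le_compat_l; auto).
  assert (P4' : c * (2 * Yd * v * ud) <= c * (K * (v * v + ud * ud))) by (apply Rmult_le_compat_l; auto).
  assert (P5 : 0 <= s * (v * v)) by (apply Rmult_le_pos; [lra| apply Rle_0_sqr]).
  assert (P6 : 0 <= c * K * (v * v)) by (apply Rmult_le_pos; [apply Rmult_le_pos; lra| apply Rle_0_sqr]).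
  assert (P7 : 0 <= K * (v * v)) by (apply Rmult_le_pos; [lra| apply Rle_0_sqr]).
  assert (P8 : 0 <= c * K * (u * u)) by (apply Rmult_le_pos; [apply Rmult_le_pos; lra| apply Rle_0_sqr]).
  assert (P9 : 0 <= u * u) by apply Rle_0_sqr.
  lra.
Qed.

Lemma deriv_expq1 K A k t0 t : is_derive (fun u => K + A * exp (k * (u - t0))) t (A * k * exp (k * (t - t0))).
Proof. auto_derive; auto. unfold Rminus; ring. Qed.

Section Main.
Variables s Yk tau B0 : R.
Variables phi psi : R -> R.
Hypothesis hs : 0 < s.
Hypothesis hY : 0 < Yk.
Hypothesis htau : 0 <= tau.
Hypothesis hphi : nonneg_cont_on tau phi.
Hypothesis hpsi : nonneg_cont_on tau psi.
Hypothesis hB : forall u, - tau <= u <= 0 -> phi u <= B0 /\ psi u <= B0.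

Definition cc := Yk * exp (- s * tau).
Definition Phi t := phi (clampt tau t).
Definition Psi t := psi (clampt tau t).
Definition Kx := Rmax 1 (phi 0).
Definition K1 := Rmax (psi 0) (cc * B0 * B0 / s).
Definition Bq := cc * (1 + s) ^ 2 / 4.
Definition K2 := Rmax (cc * Kx + K1) (Bq / s).
Definition Mb := Kx + K1 + K2 + B0 + 1.
Definition Xs := Xl s cc tau Mb Phi Psi.
Definition Ys := Yl s cc tau Mb Phi Psi.

Lemma cc_pos : 0 < cc.
Proof. unfold cc. apply Rmult_lt_0_compat; auto. apply exp_pos. Qed.

Lemma z_in : - tau <= 0 <= 0.
Proof. lra. Qed.

Lemma phi0_nn : 0 <= phi 0.
Proof. apply hphi. apply z_in. Qed.
Lemma psi0_nn : 0 <= psi 0.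
Proof. apply hpsi. apply z_in. Qed.

Lemma B0_nn : 0 <= B0.
Proof. pose proof phi0_nn. destruct (hB 0 z_in). lra. Qed.

Lemma Phi_bnd u : 0 <= Phi u <= B0.
Proof. unfold Phi. pose proof (clamp_in tau u htau). split. apply hphi; auto. apply hB; auto. Qed.
Lemma Psi_bnd u : 0 <= Psi u <= B0.
Proof. unfold Psi. pose proof (clamp_in tau u htau). split. apply hpsi; auto. apply hB; auto. Qed.

Lemma Bq_nn : 0 <= Bq.
Proof. unfold Bq. pose proof cc_pos. pose proof (pow2_ge_0 (1 + s)). nra. Qed.

Lemma consts : 1 <= Kx /\ phi 0 <= Kx /\ psi 0 <= K1 /\ cc * B0 * B0 / s <= K1 /\ 0 <= K1 /\
  cc * Kx + K1 <= K2 /\ Bq / s <= K2 /\ 0 <= K2 /\ Kx + 1 <= Mb /\ K1 <= Mb /\ K2 <= Mb /\ B0 <= Mb /\ 2 <= Mb.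
Proof.
  pose proof phi0_nn. pose proof psi0_nn. pose proof B0_nn. pose proof cc_pos. pose proof Bq_nn.
  assert (1 <= Kx) by apply Rmax_l. assert (phi 0 <= Kx) by apply Rmax_r.
  assert (psi 0 <= K1) by apply Rmax_l. assert (cc * B0 * B0 / s <= K1) by apply Rmax_r.
  assert (cc * Kx + K1 <= K2) by apply Rmax_l. assert (Bq / s <= K2) by apply Rmax_r.
  assert (0 <= cc * Kx) by nra.
  unfold Mb. repeat split; lra.
Qed.

Lemma Mb_nn : 0 <= Mb.
Proof. pose proof consts. lra. Qed.

Lemma cPhi : Cont Phi.
Proof. apply ext_cont; auto. Qed.
Lemma cPsi : Cont Psi.
Proof. apply ext_cont; auto. Qed.
Lemma bPsi u : Rabs (Psi u) <= B0.
Proof. pose proof (Psi_bnd u). rewrite Rabs_right; lra. Qed.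

Lemma cXY : Cont Xs /\ Cont Ys.
Proof. apply (Cont_lim s cc tau Mb B0 hs (Rlt_le _ _ cc_pos) htau Mb_nn Phi Psi cPhi cPsi bPsi). Qed.

Lemma FP t : Xs t = stepX Mb Phi Xs Ys t /\ Ys t = stepY s cc tau Mb Psi Xs Ys t.
Proof. apply (fixed_point s cc tau Mb B0 hs (Rlt_le _ _ cc_pos) htau Mb_nn Phi Psi cPhi cPsi bPsi). Qed.

Lemma init' t : t <= 0 -> Xs t = Phi t /\ Ys t = Psi t.
Proof.
  intros Ht. destruct (FP t) as [H1 H2]. unfold stepX, stepY in *. rewrite Rmax_right in H1, H2 by lra.
  rewrite RInt_point in H1, H2. split; [rewrite H1|rewrite H2]; apply Rplus_0_r.
Qed.

Lemma init t : - tau <= t <= 0 -> Xs t = phi t /\ Ys t = psi t.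
Proof. intros Ht. destruct (init' t ltac:(lra)) as [H1 H2]. unfold Phi, Psi in *. rewrite clamp_id in H1, H2 by auto. auto. Qed.

Lemma derX t : 0 < t -> is_derive Xs t (Ff Mb (Xs t) (Ys t)).
Proof.
  intros Ht. destruct cXY as [CX CY].
  apply (is_derive_ext_loc (fun u => phi 0 + RInt (fun v => Ff Mb (Xs v) (Ys v)) 0 u)).
  - exists (mkposreal t Ht). intros u Hu. apply ball_R in Hu. change (Rabs (u - t) < t) in Hu. apply Rabs_def2 in Hu.
    destruct (FP u) as [H1 _]. rewrite H1. unfold stepX, Phi. rewrite clamp_pos by lra. rewrite Rmax_left by lra. reflexivity.
  - replace (Ff Mb (Xs t) (Ys t)) with (0 + Ff Mb (Xs t) (Ys t)) by ring.
    apply is_derive_plus'. apply is_derive_const'. apply (RInt_deriv (fun v => Ff Mb (Xs v) (Ys v))).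
    apply Cont_Ff; auto. apply Mb_nn.
Qed.

Lemma derY t : 0 < t -> is_derive Ys t (Gf s cc Mb (Ys t) (Xs (t - tau)) (Ys (t - tau))).
Proof.
  intros Ht. destruct cXY as [CX CY].
  apply (is_derive_ext_loc (fun u => psi 0 + RInt (fun v => Gf s cc Mb (Ys v) (Xs (v - tau)) (Ys (v - tau))) 0 u)).
  - exists (mkposreal t Ht). intros u Hu. apply ball_R in Hu. change (Rabs (u - t) < t) in Hu. apply Rabs_def2 in Hu.
    destruct (FP u) as [_ H1]. rewrite H1. unfold stepY, Psi. rewrite clamp_pos by lra. rewrite Rmax_left by lra. reflexivity.
  - replace (Gf s cc Mb (Ys t) (Xs (t - tau)) (Ys (t - tau))) with (0 + Gf s cc Mb (Ys t) (Xs (t - tau)) (Ys (t - tau))) by ring.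
    apply is_derive_plus'. apply is_derive_const'. apply (RInt_deriv (fun v => Gf s cc Mb (Ys v) (Xs (v - tau)) (Ys (v - tau)))).
    apply Cont_Gf; auto; try apply Mb_nn; apply (Rlt_le _ _ cc_pos).
Qed.


Lemma cc_nn : 0 <= cc.
Proof. left; apply cc_pos. Qed.

Lemma X_nn t : 0 <= t -> 0 <= Xs t.
Proof.
  intros Ht. destruct cXY as [CX CY]. pose proof consts. pose proof Mb_nn.
  set (k := 2 + 2 * Mb).
  cut (- Xs t <= 0). lra.
  apply (eps_arg _ (exp (k * (t - 0)))). apply exp_pos. intros e He.
  refine (crossing2 (fun u => - Xs u) (fun u => e * exp (k * (u - 0))) (fun u => e * k * exp (k * (u - 0))) 0 t Ht _ _ _ _ _ t _).
  - intros; apply Cont_opp; auto.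
  - apply RC_of_cpt, Cont_opp; auto.
  - intros; apply deriv_expq.
  - simpl. rewrite Rminus_0_r, Rmult_0_r, exp_0. destruct (init 0 z_in) as [I1 _]. rewrite I1. pose proof phi0_nn. lra.
  - intros t' Ht' Heq _. cbv beta in *. exists (- Ff Mb (Xs t') (Ys t')). split. apply is_derive_opp', derX; lra.
    pose proof (exp_pos (k * (t' - 0))). assert (0 < e * exp (k * (t' - 0))) by (apply Rmult_lt_0_compat; lra).
    pose proof (Ff_neg Mb (Xs t') (Ys t') Mb_nn ltac:(lra)).
    assert ((1 + 2 * Mb) * (- Xs t') < k * (- Xs t')) by (apply Rmult_lt_compat_r; unfold k; lra).
    replace (e * k * exp (k * (t' - 0))) with (k * (- Xs t')) by (rewrite Heq; ring). lra.
  - lra.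
Qed.

Lemma Y_nn t : 0 <= t -> 0 <= Ys t.
Proof.
  intros Ht. destruct cXY as [CX CY]. pose proof consts. pose proof Mb_nn. pose proof cc_nn.
  cut (- Ys t <= 0). lra.
  apply (eps_arg _ (exp (1 * (t - 0)))). apply exp_pos. intros e He.
  refine (crossing2 (fun u => - Ys u) (fun u => e * exp (1 * (u - 0))) (fun u => e * 1 * exp (1 * (u - 0))) 0 t Ht _ _ _ _ _ t _).
  - intros; apply Cont_opp; auto.
  - apply RC_of_cpt, Cont_opp; auto.
  - intros; apply deriv_expq.
  - simpl. rewrite Rminus_0_r, Rmult_0_r, exp_0. destruct (init 0 z_in) as [_ I1]. rewrite I1. pose proof psi0_nn. lra.
  - intros t' Ht' Heq _. cbv beta in *. exists (- Gf s cc Mb (Ys t') (Xs (t' - tau)) (Ys (t' - tau))). split. apply is_derive_opp', derY; lra.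
    pose proof (exp_pos (1 * (t' - 0))). assert (0 < e * exp (1 * (t' - 0))) by (apply Rmult_lt_0_compat; lra).
    pose proof (Gf_lb s cc Mb (Ys t') (Xs (t' - tau)) (Ys (t' - tau)) cc_nn Mb_nn).
    assert (- s * Ys t' > 0) by nra.
    replace (e * 1 * exp (1 * (t' - 0))) with (- Ys t') by (rewrite Heq; ring). nra.
  - lra.
Qed.

Lemma X_le t : 0 <= t -> Xs t <= Kx.
Proof.
  intros Ht. destruct cXY as [CX CY]. pose proof consts. pose proof Mb_nn.
  cut (Xs t - Kx <= 0). lra.
  apply (eps_arg _ (1 + t - 0)). lra. intros e He.
  cut (Xs t < Kx + e * (1 + t - 0)). lra.
  refine (crossing2 Xs (fun u => Kx + e * (1 + u - 0)) (fun _ => e) 0 t Ht _ _ _ _ _ t _).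
  - intros; auto.
  - apply RC_of_cpt; auto.
  - intros; apply deriv_linq.
  - destruct (init 0 z_in) as [I1 _]. rewrite I1. lra.
  - intros t' Ht' Heq _. cbv beta in *. exists (Ff Mb (Xs t') (Ys t')). split. apply derX; lra.
    assert (Hx1 : 1 <= Xs t') by nra. pose proof (Ff_ge1 Mb (Xs t') (Ys t') ltac:(lra) Hx1). lra.
  - lra.
Qed.

Lemma Y_le1 t : 0 <= t <= tau -> Ys t <= K1.
Proof.
  intros Ht. destruct cXY as [CX CY]. pose proof consts. pose proof Mb_nn. pose proof cc_pos. pose proof B0_nn.
  cut (Ys t - K1 <= 0). lra.
  apply (eps_arg _ (1 + t - 0)). lra. intros e He.
  cut (Ys t < K1 + e * (1 + t - 0)). lra.
  refine (crossing2 Ys (fun u => K1 + e * (1 + u - 0)) (fun _ => e) 0 t ltac:(lra) _ _ _ _ _ t _).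
  - intros; auto.
  - apply RC_of_cpt; auto.
  - intros; apply deriv_linq.
  - destruct (init 0 z_in) as [_ I1]. rewrite I1. lra.
  - intros t' Ht' Heq _. cbv beta in *. exists (Gf s cc Mb (Ys t') (Xs (t' - tau)) (Ys (t' - tau))). split. apply derY; lra.
    destruct (init' (t' - tau) ltac:(lra)) as [E1 E2]. rewrite E1, E2.
    pose proof (Phi_bnd (t' - tau)). pose proof (Psi_bnd (t' - tau)).
    unfold Gf. pose proof (cl_le Mb (Phi (t' - tau)) Mb_nn ltac:(lra)). pose proof (cl_le Mb (Psi (t' - tau)) Mb_nn ltac:(lra)).
    pose proof (cl_bnd Mb (Phi (t' - tau)) Mb_nn). pose proof (cl_bnd Mb (Psi (t' - tau)) Mb_nn).
    assert (cl Mb (Psi (t' - tau)) * cl Mb (Phi (t' - tau)) <= B0 * B0) by (apply Rmult_le_compat; lra).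
    assert (cc * (cl Mb (Psi (t' - tau)) * cl Mb (Phi (t' - tau))) <= cc * (B0 * B0)) by (apply Rmult_le_compat_l; lra).
    assert (s * (cc * B0 * B0 / s) = cc * B0 * B0) by (field; lra).
    assert (s * (cc * B0 * B0 / s) < s * Ys t') by (apply Rmult_lt_compat_l; nra).
    nra.
  - lra.
Qed.

Lemma W_le t : tau <= t -> cc * Xs (t - tau) + Ys t <= K2.
Proof.
  intros Ht. destruct cXY as [CX CY]. pose proof consts. pose proof Mb_nn. pose proof cc_pos. pose proof B0_nn. pose proof Bq_nn.
  cut (cc * Xs (t - tau) + Ys t - K2 <= 0). lra.
  apply (eps_arg _ (1 + t - tau)). lra. intros e He.
  cut (cc * Xs (t - tau) + Ys t < K2 + e * (1 + t - tau)). lra.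
  refine (crossing2 (fun u => cc * Xs (u - tau) + Ys u) (fun u => K2 + e * (1 + u - tau)) (fun _ => e) tau t Ht _ _ _ _ _ t _).
  - intros; apply Cont_plus; auto. apply Cont_mult. apply Cont_const. apply Cont_shift; auto.
  - apply RC_of_cpt. apply Cont_plus; auto. apply Cont_mult. apply Cont_const. apply Cont_shift; auto.
  - intros; apply deriv_linq.
  - simpl. rewrite Rminus_eq_0. destruct (init 0 z_in) as [I1 _]. rewrite I1.
    pose proof (Y_le1 tau ltac:(lra)). assert (cc * phi 0 <= cc * Kx) by (apply Rmult_le_compat_l; lra). lra.
  - intros t' Ht' Heq _. cbv beta in *.
    exists (cc * Ff Mb (Xs (t' - tau)) (Ys (t' - tau)) + Gf s cc Mb (Ys t') (Xs (t' - tau)) (Ys (t' - tau))). split.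
    apply is_derive_plus'. apply is_derive_scal'. apply is_derive_shift. apply derX; lra. apply derY; lra.
    pose proof (X_nn (t' - tau) ltac:(lra)). pose proof (X_le (t' - tau) ltac:(lra)). pose proof (Y_nn (t' - tau) ltac:(lra)).
    set (a := Xs (t' - tau)) in *. set (b := Ys (t' - tau)) in *.
    unfold Ff, Gf. rewrite cls_id by lra. rewrite (cl_id Mb a) by lra.
    pose proof (cl_bnd Mb b Mb_nn).
    assert (cc * a * (1 + s - a) <= Bq). { unfold Bq. assert (0 <= cc * ((1 + s) / 2 - a) ^ 2) by (apply Rmult_le_pos; [lra| apply pow2_ge_0]). nra. }
    assert (s * (Bq / s) = Bq) by (field; lra).
    assert (s * (Bq / s) < s * (cc * a + Ys t')) by (apply Rmult_lt_compat_l; nra).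
    nra.
  - lra.
Qed.

Lemma XY_bnd u : - tau <= u -> (0 <= Xs u <= Mb) /\ (0 <= Ys u <= Mb).
Proof.
  intros Hu. pose proof consts. pose proof cc_pos.
  destruct (Rle_or_lt u 0) as [Hu0|Hu0].
  - destruct (init' u Hu0) as [E1 E2]. rewrite E1, E2. pose proof (Phi_bnd u). pose proof (Psi_bnd u). lra.
  - pose proof (X_nn u ltac:(lra)). pose proof (X_le u ltac:(lra)). pose proof (Y_nn u ltac:(lra)).
    split. lra. split. lra.
    destruct (Rle_or_lt u tau). pose proof (Y_le1 u ltac:(lra)). lra.
    pose proof (W_le u ltac:(lra)). pose proof (X_nn (u - tau) ltac:(lra)).
    assert (0 <= cc * Xs (u - tau)) by nra. lra.
Qed.

Lemma derX' t : 0 < t -> is_derive Xs t (Xs t * (1 - Xs t) - Ys t * Xs t).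
Proof. intros Ht. destruct (XY_bnd t ltac:(lra)) as [A B]. pose proof (derX t Ht). rewrite Ff_id in H by auto.
  replace (Xs t * (1 - Xs t) - Ys t * Xs t) with (Xs t * (1 - Xs t - Ys t)) by ring. exact H. Qed.

Lemma derY' t : 0 < t -> is_derive Ys t (- s * Ys t + Yk * exp (- s * tau) * Ys (t - tau) * Xs (t - tau)).
Proof. intros Ht. destruct (XY_bnd (t - tau) ltac:(lra)) as [A B]. pose proof (derY t Ht). rewrite Gf_id in H by auto.
  exact H. Qed.

Lemma Xs_sol : is_solution s Yk tau phi psi Xs Ys.
Proof.
  destruct cXY as [CX CY]. split; [|split; [|split]].
  - apply init.
  - apply filterlim_of_cpt; auto.
  - apply filterlim_of_cpt; auto.
  - intros t Ht. split. apply derX'; auto. apply derY'; auto.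
Qed.

Lemma uniq x1 y1 : is_solution s Yk tau phi psi x1 y1 -> forall t, - tau <= t -> x1 t = Xs t /\ y1 t = Ys t.
Proof.
  intros [Hi [Hr1 [Hr2 Hd]]] t Ht.
  destruct (Rle_or_lt t 0) as [Ht0|Ht0].
  { destruct (Hi t ltac:(lra)) as [A1 A2]. destruct (init t ltac:(lra)) as [B1 B2]. split; congruence. }
  destruct cXY as [CX CY]. pose proof consts. pose proof Mb_nn. pose proof cc_pos. pose proof B0_nn.
  assert (Cx1 : forall u, 0 < u -> continuity_pt x1 u) by (intros u Hu; apply (is_derive_cpt _ _ _ (proj1 (Hd u Hu)))).
  assert (Cy1 : forall u, 0 < u -> continuity_pt y1 u) by (intros u Hu; apply (is_derive_cpt _ _ _ (proj2 (Hd u Hu)))).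
  assert (R1 := RC_of_filterlim _ _ Hr1). assert (R2 := RC_of_filterlim _ _ Hr2).
  assert (Cm : forall f, (forall u, 0 < u -> continuity_pt f u) -> RC f 0 -> forall u, 0 <= u -> continuity_pt (fun v => f (Rmax v 0)) u).
  { intros f Hf Hrc u Hu. destruct (Req_dec u 0) as [->|Hne]. apply RC_cmax; auto.
    apply (continuity_pt_comp (fun v => Rmax v 0) f). apply (Cont_lip _ 1). lra.
    intros a b. rewrite Rmult_1_l. unfold Rmax. repeat destruct Rle_dec; unfold Rabs; repeat destruct Rcase_abs; lra.
    rewrite Rmax_left by lra. apply Hf; lra. }
  destruct (bound_on (fun v => x1 (Rmax v 0)) 0 t ltac:(lra) (fun u Hu => Cm x1 Cx1 R1 u (proj1 Hu))) as [Ka [HKa Ba]].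
  destruct (bound_on (fun v => y1 (Rmax v 0)) 0 t ltac:(lra) (fun u Hu => Cm y1 Cy1 R2 u (proj1 Hu))) as [Kb [HKb Bb]].
  set (K := Ka + Kb + Mb + B0).
  assert (HK : 0 <= K) by (unfold K; lra).
  assert (BD : forall u, - tau <= u <= t -> Rabs (x1 u) <= K /\ Rabs (y1 u) <= K /\ Rabs (Xs u) <= K /\ Rabs (Ys u) <= K).
  { intros u Hu. destruct (XY_bnd u ltac:(lra)) as [X1 X2].
    assert (Rabs (Xs u) <= K) by (rewrite Rabs_right; unfold K; lra).
    assert (Rabs (Ys u) <= K) by (rewrite Rabs_right; unfold K; lra).
    destruct (Rle_or_lt u 0) as [Hu0|Hu0].
    - destruct (Hi u ltac:(lra)) as [A1 A2]. destruct (init u ltac:(lra)) as [B1 B2].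
      rewrite A1, A2, <- B1, <- B2. auto.
    - specialize (Ba u ltac:(lra)). specialize (Bb u ltac:(lra)). rewrite Rmax_left in Ba, Bb by lra.
      repeat split; auto; unfold K; lra. }
  set (e := fun u => (x1 u - Xs u) * (x1 u - Xs u) + (y1 u - Ys u) * (y1 u - Ys u)).
  assert (He0 : forall u, 0 <= e u) by (intros; unfold e; pose proof (Rle_0_sqr (x1 u - Xs u)); pose proof (Rle_0_sqr (y1 u - Ys u)); unfold Rsqr in *; lra).
  assert (Hz : forall u, - tau <= u <= 0 -> e u = 0).
  { intros u Hu. destruct (Hi u Hu) as [A1 A2]. destruct (init u Hu) as [B1 B2]. unfold e. rewrite A1, A2, B1, B2. ring. }
  set (kap := (2 + 7 * K + 2 * cc * K) + cc * K + 1).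
  assert (Hkap : 0 < kap) by (unfold kap; assert (0 <= cc * K) by nra; nra).
  assert (Hlt : forall eps, 0 < eps -> e t < eps * exp (kap * (t - 0))).
  { intros eps Heps.
    refine (crossing2 e (fun u => eps * exp (kap * (u - 0))) (fun u => eps * kap * exp (kap * (u - 0))) 0 t ltac:(lra) _ _ _ _ _ t _).
    - intros u Hu. unfold e. apply cpt_plus; apply cpt_mult; apply cpt_minus; auto; try apply Cx1; try apply Cy1; lra.
    - apply cmax_RC. unfold e. apply cpt_plus; apply cpt_mult; apply cpt_minus;
      first [apply (Cont_pos Xs CX) | apply (Cont_pos Ys CY) | apply (Cm x1 Cx1 R1); lra | apply (Cm y1 Cy1 R2); lra].
    - intros; apply deriv_expq.
    - rewrite (Hz 0 ltac:(lra)). rewrite Rminus_0_r, Rmult_0_r, exp_0. lra.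
    - intros t' Ht' Heq Hbef. cbv beta in *.
      destruct (Hd t' ltac:(lra)) as [D1 D2].
      pose proof (derX' t' ltac:(lra)) as D3. pose proof (derY' t' ltac:(lra)) as D4.
      set (df := (x1 t' * (1 - x1 t') - y1 t' * x1 t') - (Xs t' * (1 - Xs t') - Ys t' * Xs t')).
      set (dg := (- s * y1 t' + Yk * exp (- s * tau) * y1 (t' - tau) * x1 (t' - tau)) - (- s * Ys t' + Yk * exp (- s * tau) * Ys (t' - tau) * Xs (t' - tau))).
      exists (df * (x1 t' - Xs t') + (x1 t' - Xs t') * df + (dg * (y1 t' - Ys t') + (y1 t' - Ys t') * dg)). split.
      { unfold e. apply (is_derive_plus' (fun u => (x1 u - Xs u) * (x1 u - Xs u)) (fun u => (y1 u - Ys u) * (y1 u - Ys u))).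
        apply (is_derive_mult' (fun u => x1 u - Xs u) (fun u => x1 u - Xs u)); apply (is_derive_minus' x1 Xs); auto.
        apply (is_derive_mult' (fun u => y1 u - Ys u) (fun u => y1 u - Ys u)); apply (is_derive_minus' y1 Ys); auto. }
      assert (Hq : 0 < eps * exp (kap * (t' - 0))) by (apply Rmult_lt_0_compat; [lra| apply exp_pos]).
      assert (Hed : e (t' - tau) <= eps * exp (kap * (t' - 0))).
      { destruct (Rlt_or_le (t' - tau) 0) as [Hn|Hn].
        - rewrite Hz by lra. lra.
        - destruct (Req_dec tau 0) as [Ht0'|Ht0'].
          + rewrite Ht0'. replace (t' - 0) with t' at 1 by ring. rewrite Heq. lra.
          + specialize (Hbef (t' - tau) ltac:(lra)). eapply Rlt_le, Rlt_le_trans. exact Hbef.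
            apply Rmult_le_compat_l. lra. apply exp_mono. apply Rmult_le_compat_l; lra. }
      destruct (BD t' ltac:(lra)) as [Q1 [Q2 [Q3 Q4]]].
      destruct (BD (t' - tau) ltac:(lra)) as [Q5 [Q6 [Q7 Q8]]].
      pose proof (alg_ineq K cc s (x1 t') (Xs t') (y1 t') (Ys t') (x1 (t' - tau)) (Xs (t' - tau)) (y1 (t' - tau)) (Ys (t' - tau))
        cc_nn hs HK Q1 Q3 Q2 Q5 Q8) as AI. cbv zeta in AI. fold cc in df, dg.
      fold df dg in AI. unfold e in Heq, Hed.
      set (E := eps * exp (kap * (t' - 0))) in *.
      assert (A1 : (2 + 7 * K + 2 * cc * K) * ((x1 t' - Xs t') * (x1 t' - Xs t') + (y1 t' - Ys t') * (y1 t' - Ys t')) = (2 + 7 * K + 2 * cc * K) * E) by (rewrite Heq; reflexivity).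
      assert (A2 : cc * K * ((x1 (t' - tau) - Xs (t' - tau)) * (x1 (t' - tau) - Xs (t' - tau)) + (y1 (t' - tau) - Ys (t' - tau)) * (y1 (t' - tau) - Ys (t' - tau))) <= cc * K * E).
      { apply Rmult_le_compat_l. nra. exact Hed. }
      replace (eps * kap * exp (kap * (t' - 0))) with (kap * E) by (unfold E; ring).
      unfold kap. nra.
    - lra. }
  assert (e t <= 0) by (apply (eps_arg _ (exp (kap * (t - 0)))); [apply exp_pos | exact Hlt]).
  assert (e t = 0) by (pose proof (He0 t); lra).
  unfold e in H4. pose proof (Rle_0_sqr (x1 t - Xs t)). pose proof (Rle_0_sqr (y1 t - Ys t)). unfold Rsqr in *.
  split; apply Rminus_diag_uniq; nra.
Qed.

Lemma X_limsup eps : 0 < eps -> exists T, forall t, T <= t -> Xs t <= 1 + eps.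
Proof.
  intros He. destruct cXY as [CX CY].
  set (Q := Rmax (Xs 1 - 1) 0 + eps).
  assert (HQ : 0 < Q) by (unfold Q; pose proof (Rmax_r (Xs 1 - 1) 0); lra).
  assert (Hb : forall t, 1 <= t -> Xs t < 1 + Q * exp (- (/ 2) * (t - 1))).
  { intros t Ht.
    refine (crossing2 Xs (fun u => 1 + Q * exp (- (/ 2) * (u - 1))) (fun u => Q * (- (/ 2)) * exp (- (/ 2) * (u - 1))) 1 t Ht _ _ _ _ _ t _).
    - intros; auto.
    - apply RC_of_cpt; auto.
    - intros; apply deriv_expq1.
    - cbv beta. rewrite Rminus_eq_0, Rmult_0_r, exp_0. pose proof (Rmax_l (Xs 1 - 1) 0). unfold Q. lra.
    - intros t' Ht' Heq _. cbv beta in *. exists (Xs t' * (1 - Xs t') - Ys t' * Xs t'). split. apply derX'; lra.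
      destruct (XY_bnd t' ltac:(lra)) as [B1 B2].
      set (E := exp (- (/ 2) * (t' - 1))) in *. assert (0 < E) by apply exp_pos.
      assert (0 <= Ys t' * Xs t') by nra.
      assert (Xs t' * (1 - Xs t') <= - (Xs t' - 1)) by nra.
      assert (0 < Q * E) by nra. nra.
    - lra. }
  destruct (exp_decay Q eps (/ 2) 1 He ltac:(lra)) as [T [HT1 HT2]].
  exists T. intros t Ht. specialize (Hb t ltac:(lra)). specialize (HT2 t Ht). lra.
Qed.

Lemma Y_limsup eps : 0 < eps -> exists T, forall t, T <= t -> Ys t <= Bq / s + eps.
Proof.
  intros He. destruct cXY as [CX CY]. pose proof cc_pos. pose proof Bq_nn.
  set (a := tau + 1).
  set (W := fun u => cc * Xs (u - tau) + Ys u).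
  set (Q := Rmax (W a - Bq / s) 0 + eps).
  assert (HQ : 0 < Q) by (unfold Q; pose proof (Rmax_r (W a - Bq / s) 0); lra).
  assert (Hb : forall t, a <= t -> W t < Bq / s + Q * exp (- (s / 2) * (t - a))).
  { intros t Ht.
    refine (crossing2 W (fun u => Bq / s + Q * exp (- (s / 2) * (u - a))) (fun u => Q * (- (s / 2)) * exp (- (s / 2) * (u - a))) a t Ht _ _ _ _ _ t _).
    - intros; unfold W; apply Cont_plus; auto. apply Cont_mult. apply Cont_const. apply Cont_shift; auto.
    - apply RC_of_cpt. unfold W; apply Cont_plus; auto. apply Cont_mult. apply Cont_const. apply Cont_shift; auto.
    - intros; apply deriv_expq1.
    - cbv beta. rewrite Rminus_eq_0, Rmult_0_r, exp_0. pose proof (Rmax_l (W a - Bq / s) 0). unfold Q. lra.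
    - intros t' Ht' Heq _. cbv beta in *.
      exists (cc * (Xs (t' - tau) * (1 - Xs (t' - tau)) - Ys (t' - tau) * Xs (t' - tau)) + (- s * Ys t' + Yk * exp (- s * tau) * Ys (t' - tau) * Xs (t' - tau))).
      split. unfold W. apply is_derive_plus'. apply is_derive_scal'. apply is_derive_shift. apply derX'. unfold a in Ht'; lra. apply derY'. unfold a in Ht'; lra.
      fold cc. unfold W in Heq.
      destruct (XY_bnd (t' - tau) ltac:(unfold a in Ht'; lra)) as [B1 B2].
      set (xd := Xs (t' - tau)) in *. set (yd := Ys (t' - tau)) in *.
      set (E := exp (- (s / 2) * (t' - a))) in *. assert (0 < E) by apply exp_pos.
      assert (cc * xd * (1 + s - xd) <= Bq). { unfold Bq. assert (0 <= cc * ((1 + s) / 2 - xd) ^ 2) by (apply Rmult_le_pos; [lra| apply pow2_ge_0]). nra. }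
      assert (s * (Bq / s) = Bq) by (field; lra).
      assert (0 < s * (Q * E)) by (apply Rmult_lt_0_compat; [lra| nra]).
      assert (HY : Ys t' = Bq / s + Q * E - cc * xd) by lra.
      rewrite HY. nra.
    - lra. }
  destruct (exp_decay Q eps (s / 2) a He ltac:(lra)) as [T [HT1 HT2]].
  exists T. intros t Ht. specialize (Hb t ltac:(lra)). specialize (HT2 t Ht).
  destruct (XY_bnd (t - tau) ltac:(unfold a in HT1; lra)) as [B1 B2]. unfold W in Hb.
  assert (0 <= cc * Xs (t - tau)) by nra. lra.
Qed.

Lemma X_pos : phi 0 > 0 -> forall t, 0 < t -> 0 < Xs t.
Proof.
  intros Hp t Ht. destruct cXY as [CX CY]. pose proof Mb_nn.
  set (k := 2 * Mb + 1).
  cut (- Xs t < - (phi 0 / 2) * exp ((- k) * (t - 0))). { pose proof (exp_pos ((- k) * (t - 0))). nra. }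
  refine (crossing2 (fun u => - Xs u) (fun u => - (phi 0 / 2) * exp ((- k) * (u - 0))) (fun u => - (phi 0 / 2) * (- k) * exp ((- k) * (u - 0))) 0 t ltac:(lra) _ _ _ _ _ t _).
  - intros; apply Cont_opp; auto.
  - apply RC_of_cpt, Cont_opp; auto.
  - intros; apply deriv_expq.
  - cbv beta. rewrite Rminus_0_r, Rmult_0_r, exp_0. destruct (init 0 z_in) as [I1 _]. rewrite I1. lra.
  - intros t' Ht' Heq _. cbv beta in *. exists (- (Xs t' * (1 - Xs t') - Ys t' * Xs t')). split. apply is_derive_opp', derX'; lra.
    destruct (XY_bnd t' ltac:(lra)) as [B1 B2].
    set (E := exp (- k * (t' - 0))) in *. assert (0 < E) by apply exp_pos.
    assert (Hx : Xs t' = phi 0 / 2 * E) by lra.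
    assert (0 < Xs t') by (rewrite Hx; nra).
    assert (- (Xs t' * (1 - Xs t') - Ys t' * Xs t') <= 2 * Mb * Xs t') by nra.
    replace (- (phi 0 / 2) * - k * E) with (k * Xs t') by (rewrite Hx; ring). unfold k. nra.
  - lra.
Qed.

Lemma Y_pos th : - tau <= th <= 0 -> phi th * psi th > 0 -> exists T, 0 <= T /\ forall t, T < t -> 0 < Ys t.
Proof.
  intros Hth Hp. destruct cXY as [CX CY]. pose proof cc_pos.
  set (p := fun u => Ys (u - tau) * Xs (u - tau)).
  assert (Cp : Cont p) by (apply Cont_mult; apply Cont_shift; auto).
  assert (Hp0 : p (th + tau) > 0).
  { unfold p. replace (th + tau - tau) with th by ring. destruct (init th Hth) as [I1 I2]. rewrite I1, I2. lra. }
  destruct (cpt_elim p (th + tau) (Cp _) (p (th + tau)) Hp0) as [d [Hd Hu]].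
  set (ta := th + tau + d / 2).
  assert (Hta : 0 < ta) by (unfold ta; lra).
  assert (Hpa : 0 < p ta). { specialize (Hu ta ltac:(unfold ta; rewrite Rabs_right; lra)). apply Rabs_def2 in Hu. lra. }
  assert (Ht2 : exists t2, 0 < t2 /\ 0 < Ys t2).
  { destruct (Y_nn ta ltac:(lra)) as [Hy|Hy].
    - exists ta; split; auto.
    - pose proof (derY' ta Hta) as D. rewrite <- Hy in D.
      destruct (deriv_pos_right Ys ta _ 1 D) as [u [Hu1 Hu2]].
      + fold cc. unfold p in Hpa. nra.
      + lra.
      + exists u. split; lra. }
  destruct Ht2 as [t2 [Ht2 Hy2]].
  exists t2. split. lra. intros t Ht.
  cut (- Ys t < - (Ys t2 / 2) * exp ((- (2 * s)) * (t - t2))). { pose proof (exp_pos ((- (2 * s)) * (t - t2))). nra. }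
  refine (crossing2 (fun u => - Ys u) (fun u => - (Ys t2 / 2) * exp ((- (2 * s)) * (u - t2))) (fun u => - (Ys t2 / 2) * (- (2 * s)) * exp ((- (2 * s)) * (u - t2))) t2 t ltac:(lra) _ _ _ _ _ t _).
  - intros; apply Cont_opp; auto.
  - apply RC_of_cpt, Cont_opp; auto.
  - intros; apply deriv_expq.
  - cbv beta. rewrite Rminus_eq_0, Rmult_0_r, exp_0. lra.
  - intros t' Ht' Heq _. cbv beta in *.
    exists (- (- s * Ys t' + Yk * exp (- s * tau) * Ys (t' - tau) * Xs (t' - tau))). split. apply is_derive_opp', derY'; lra.
    fold cc. destruct (XY_bnd (t' - tau) ltac:(lra)) as [B1 B2].
    set (E := exp (- (2 * s) * (t' - t2))) in *. assert (0 < E) by apply exp_pos.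
    assert (Hy : Ys t' = Ys t2 / 2 * E) by lra.
    assert (0 < Ys t') by (rewrite Hy; nra).
    assert (0 <= cc * Ys (t' - tau) * Xs (t' - tau)) by (apply Rmult_le_pos; [apply Rmult_le_pos|]; lra).
    replace (- (Ys t2 / 2) * - (2 * s) * E) with (2 * s * Ys t') by (rewrite Hy; ring). nra.
  - lra.
Qed.

End Main.

Theorem proposition2p1 (s Y tau : R) (hs : 0 < s) (hY : 0 < Y) (htau : 0 <= tau)
  (phi psi : R -> R) (hphi : nonneg_cont_on tau phi) (hpsi : nonneg_cont_on tau psi) :
  (* 1. existence, uniqueness *)
  (exists x y : R -> R, is_solution s Y tau phi psi x y)
  /\ (forall x1 y1 x2 y2 : R -> R,
        is_solution s Y tau phi psi x1 y1 -> is_solution s Y tau phi psi x2 y2 ->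
        forall t, -tau <= t -> x1 t = x2 t /\ y1 t = y2 t)
  /\ (forall x y : R -> R, is_solution s Y tau phi psi x y ->
        (* 1. nonnegativity *)
        (forall t, 0 <= t -> 0 <= x t /\ 0 <= y t)
        (* 2. limsup x <= 1 *)
        /\ (forall eps, 0 < eps -> exists T, forall t, T <= t -> x t <= 1 + eps)
        (* 2. limsup y <= Y e^{-s tau} (s+1)^2 / (4 s) *)
        /\ (forall eps, 0 < eps -> exists T, forall t, T <= t ->
              y t <= / (4 * s) * Y * exp (- s * tau) * (s + 1) ^ 2 + eps)
        (* 3. persistence of positivity for data in X^0 *)
        /\ (in_X0 tau phi psi ->
              (forall t, 0 < t -> 0 < x t)
              /\ exists T, 0 <= T /\ forall t, T < t -> 0 < y t)).
Proof.
  pose proof (ext_cont tau phi htau hphi) as CP. pose proof (ext_cont tau psi htau hpsi) as CQ.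
  destruct (continuity_ab_maj (fun t => phi (clampt tau t)) (- tau) 0 ltac:(lra) (fun c _ => CP c)) as [Mx [HMx _]].
  destruct (continuity_ab_maj (fun t => psi (clampt tau t)) (- tau) 0 ltac:(lra) (fun c _ => CQ c)) as [My [HMy _]].
  set (B0 := Rmax (phi (clampt tau Mx)) (psi (clampt tau My))).
  assert (hB : forall u, - tau <= u <= 0 -> phi u <= B0 /\ psi u <= B0).
  { intros u Hu. specialize (HMx u Hu). specialize (HMy u Hu). rewrite clamp_id in HMx, HMy by auto.
    pose proof (Rmax_l (phi (clampt tau Mx)) (psi (clampt tau My))). pose proof (Rmax_r (phi (clampt tau Mx)) (psi (clampt tau My))).
    fold B0 in H, H0. lra. }
  assert (U : forall x y, is_solution s Y tau phi psi x y -> forall t, - tau <= t -> x t = Xs s Y tau B0 phi psi t /\ y t = Ys s Y tau B0 phi psi t).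
  { intros x y H. eapply uniq; eauto. }
  split; [|split].
  - exists (Xs s Y tau B0 phi psi), (Ys s Y tau B0 phi psi). eapply Xs_sol; eauto.
  - intros x1 y1 x2 y2 H1 H2 t Ht. destruct (U _ _ H1 t Ht) as [A1 A2]. destruct (U _ _ H2 t Ht) as [B1 B2]. split; congruence.
  - intros x y H. pose proof (U x y H) as E. split; [|split; [|split]].
    + intros t Ht. destruct (E t ltac:(lra)) as [E1 E2]. rewrite E1, E2. split. eapply X_nn; eauto. eapply Y_nn; eauto.
    + intros eps He. destruct (X_limsup s Y tau B0 phi psi) with (eps := eps) as [T HT]; auto.
      exists (Rmax T 0). intros t Ht. pose proof (Rmax_l T 0). pose proof (Rmax_r T 0).
      destruct (E t ltac:(lra)) as [E1 E2]. rewrite E1. apply HT. lra.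
    + intros eps He. destruct (Y_limsup s Y tau B0 phi psi) with (eps := eps) as [T HT]; auto.
      exists (Rmax T 0). intros t Ht. pose proof (Rmax_l T 0). pose proof (Rmax_r T 0).
      destruct (E t ltac:(lra)) as [E1 E2]. rewrite E2.
      replace (/ (4 * s) * Y * exp (- s * tau) * (s + 1) ^ 2) with (Bq s Y tau / s) by (unfold Bq, cc; field; lra).
      apply HT. lra.
    + intros [Hp0 [th [Hth Hpth]]]. split.
      * intros t Ht. destruct (E t ltac:(lra)) as [E1 E2]. rewrite E1. eapply X_pos; eauto.
      * destruct (Y_pos s Y tau B0 phi psi) with (th := th) as [T [HT1 HT2]]; auto.
        exists T. split; auto. intros t Ht. destruct (E t ltac:(lra)) as [E1 E2]. rewrite E2. apply HT2; auto.
Qed.
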